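(* Let $S\subseteq N$ with $|S|=k\ge2$ and suppose that for all $v\in S$ and all distinct $i,j\in N$, $$\frac{\partial^2(-\log p_{v,S}(\theta))}{\partial\theta_i\partial\theta_j}\Big|_{\theta=\mathbf 0}\le0.$$ Then for every $y\in S$, $$\big\|\nabla^2(-\log p_{y,S}(\theta))|_{\theta=\mathbf 0}\big\|_2\le k^4\Big(\frac{\partial p_k(\mathbf 0)}{\partial x_1}\Big)^2.$$
   Context: $F$ is a CDF of a zero-mean random variable with continuously differentiable density $f$, $f(x)\to0$ as $|x|\to\infty$, with differentiation under the integral sign permitted. $p_k(x)=\int_{\mathbb R}\prod_{v=1}^{k-1}F(x_v+z)f(z)dz$ for $x\in\mathbb R^{k-1}$; $p_{y,S}(\theta)=p_k((\theta_y-\theta_u)_{u\in S\setminus\{y\}})$ for $\theta\in\mathbb R^n$; $\frac{\partial p_k(\mathbf 0)}{\partial x_1}=\int f(z)^2F(z)^{k-2}dz$. $\|\cdot\|_2$ is the spectral norm. *)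

(* Defs.v *)
From Stdlib Require Import Reals Lra Lia List Arith ClassicalEpsilon.
Open Scope R_scope.

Fixpoint fsum (n : nat) (g : nat -> R) : R :=
  match n with O => 0 | S m => fsum m g + g m end.
Fixpoint fprod (n : nat) (g : nat -> R) : R :=
  match n with O => 1 | S m => fprod m g * g m end.

Definition improper_int (g : R -> R) (L : R) : Prop :=
  (forall a b, a <= b -> inhabited (Riemann_integrable g a b)) /\
  forall eps, 0 < eps -> exists M, 0 < M /\
    forall a b (pr : Riemann_integrable g a b),
      a <= - M -> M <= b -> Rabs (RiemannInt pr - L) < eps.

(* the value of the improper integral (0 if it does not exist) *)
Definition Iint (g : R -> R) : R :=
  epsilon (inhabits 0) (fun L => improper_int g L).

Definition is_cdf_with_density (F f : R -> R) : Prop :=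
  (forall x, 0 <= f x) /\ improper_int f 1 /\
  forall x, (forall a, a <= x -> inhabited (Riemann_integrable f a x)) /\
    forall eps, 0 < eps -> exists M, 0 < M /\
      forall a (pr : Riemann_integrable f a x), a <= - M ->
        Rabs (RiemannInt pr - F x) < eps.

(* p_m(x) = int prod_{v<m} F(x_v + z) f(z) dz   (paper's p_k with m = k-1;
   coordinates x_1..x_{k-1} of the paper are x 0 .. x (m-1) here) *)
Definition pk_integrand (F f : R -> R) (m : nat) (x : nat -> R) (z : R) : R :=
  fprod m (fun v => F (x v + z)) * f z.
Definition pk (F f : R -> R) (m : nat) (x : nat -> R) : R :=
  Iint (pk_integrand F f m x).

(* partial derivatives of the integrand with respect to x_i, and x_i x_j *)
Definition d1_integrand (F f : R -> R) (m i : nat) (x : nat -> R) (z : R) : R :=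
  f (x i + z) * fprod m (fun v => if Nat.eqb v i then 1 else F (x v + z)) * f z.
Definition d2_integrand (F f f' : R -> R) (m i j : nat) (x : nat -> R) (z : R) : R :=
  if Nat.eqb i j then
    f' (x i + z) * fprod m (fun v => if Nat.eqb v i then 1 else F (x v + z)) * f z
  else
    f (x i + z) * f (x j + z) *
    fprod m (fun v => if orb (Nat.eqb v i) (Nat.eqb v j) then 1 else F (x v + z)) * f z.

Definition upd (th : nat -> R) (i : nat) (t : R) : nat -> R :=
  fun j => if Nat.eqb j i then th j + t else th j.

Definition is_partial (phi : (nat -> R) -> R) (i : nat) (th : nat -> R) (l : R) : Prop :=
  derivable_pt_lim (fun t => phi (upd th i t)) 0 l.

(* "differentiation under the integral sign is permitted" for p_m, up to
   second order: all integrals exist, and derivatives of the integral are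
   the integrals of the derivatives of the integrand. *)
Definition dui_permitted (F f f' : R -> R) (m : nat) : Prop :=
  forall x : nat -> R,
    (exists L, improper_int (pk_integrand F f m x) L) /\
    forall i, (i < m)%nat ->
      (exists L, improper_int (d1_integrand F f m i x) L) /\
      is_partial (pk F f m) i x (Iint (d1_integrand F f m i x)) /\
      forall j, (j < m)%nat ->
        (exists L, improper_int (d2_integrand F f f' m i j x) L) /\
        is_partial (fun x' => Iint (d1_integrand F f m j x')) i x
                   (Iint (d2_integrand F f f' m i j x)).

Definition pyS (F f : R -> R) (S : list nat) (y : nat) (th : nat -> R) : R :=
  let L := remove Nat.eq_dec y S in
  pk F f (length L) (fun v => th y - th (nth v L 0%nat)).

Definition is_hessian (n : nat) (phi : (nat -> R) -> R) (th0 : nat -> R)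
  (H : nat -> nat -> R) : Prop :=
  exists delta, 0 < delta /\ exists D : nat -> (nat -> R) -> R,
    (forall j, (j < n)%nat -> forall th, (forall l, Rabs (th l - th0 l) < delta) ->
        is_partial phi j th (D j th)) /\
    (forall i j, (i < n)%nat -> (j < n)%nat -> is_partial (D j) i th0 (H i j)).

Definition opnorm_set (n : nat) (H : nat -> nat -> R) (r : R) : Prop :=
  exists x : nat -> R, fsum n (fun j => x j ^ 2) <= 1 /\
    r = sqrt (fsum n (fun i => (fsum n (fun j => H i j * x j)) ^ 2)).
Definition is_spectral_norm (n : nat) (H : nat -> nat -> R) (s : R) : Prop :=
  is_lub (opnorm_set n H) s.

(* Main.v *)
Require Import Defs.
From Stdlib Require Import Reals Lra Lia List Arith ClassicalEpsilon FunctionalExtensionality.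
From Coquelicot Require Import Coquelicot.
Open Scope R_scope.
Lemma II_unique g L1 L2 : improper_int g L1 -> improper_int g L2 -> L1 = L2.
Proof.
  intros [Hi1 H1] [_ H2].
  destruct (Req_dec L1 L2) as [|Hne]; auto.
  set (e := Rabs (L1 - L2) / 2).
  assert (He : 0 < e) by (unfold e; assert (0 < Rabs (L1 - L2)) by (apply Rabs_pos_lt; intro; apply Hne; lra); lra).
  destruct (H1 e He) as [M1 [HM1 H1']]; destruct (H2 e He) as [M2 [HM2 H2']].
  destruct (Hi1 (-(M1+M2)) (M1+M2) ltac:(lra)) as [pr].
  specialize (H1' _ _ pr ltac:(lra) ltac:(lra)).
  specialize (H2' _ _ pr ltac:(lra) ltac:(lra)).
  unfold e in *.
  assert (Rabs (L1 - L2) <= Rabs (RiemannInt pr - L1) + Rabs (RiemannInt pr - L2)).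
  { replace (L1 - L2) with (-(RiemannInt pr - L1) + (RiemannInt pr - L2)) by ring.
    eapply Rle_trans; [apply Rabs_triang|]. rewrite Rabs_Ropp; lra. }
  lra.
Qed.

Lemma II_Iint g L : improper_int g L -> Iint g = L.
Proof.
  intro H. unfold Iint.
  assert (Hs := epsilon_spec (inhabits 0) (fun L => improper_int g L) (ex_intro _ L H)).
  eapply II_unique; eauto.
Qed.

Lemma II_Iint_ex g : (exists L, improper_int g L) -> improper_int g (Iint g).
Proof. intros [L H]. rewrite (II_Iint _ _ H). exact H. Qed.

Lemma II_ext g h L : (forall z, g z = h z) -> improper_int g L -> improper_int h L.
Proof. intros E H. replace h with g; auto. apply functional_extensionality; auto. Qed.

Lemma Iint_ext g h : (forall z, g z = h z) -> Iint g = Iint h.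
Proof. intros E. replace h with g; auto. apply functional_extensionality; auto. Qed.

Lemma II_lin g1 g2 L1 L2 c : improper_int g1 L1 -> improper_int g2 L2 ->
  improper_int (fun z => g1 z + c * g2 z) (L1 + c * L2).
Proof.
  intros [I1 H1] [I2 H2]. split.
  - intros a b Hab. destruct (I1 a b Hab) as [p1]; destruct (I2 a b Hab) as [p2].
    constructor. apply RiemannInt_P10; auto.
  - intros eps He.
    destruct (H1 (eps/2) ltac:(lra)) as [M1 [HM1 H1']].
    assert (Hc : 0 < eps / (2 * (Rabs c + 1))).
    { apply Rdiv_lt_0_compat; [lra|]. pose proof (Rabs_pos c); lra. }
    destruct (H2 _ Hc) as [M2 [HM2 H2']].
    exists (M1 + M2). split; [lra|]. intros a b pr Ha Hb.
    assert (Hab : a <= b) by lra.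
    destruct (I1 a b Hab) as [p1]; destruct (I2 a b Hab) as [p2].
    rewrite (RiemannInt_P13 p1 p2 pr).
    specialize (H1' a b p1 ltac:(lra) ltac:(lra)).
    specialize (H2' a b p2 ltac:(lra) ltac:(lra)).
    replace (RiemannInt p1 + c * RiemannInt p2 - (L1 + c * L2))
      with ((RiemannInt p1 - L1) + c * (RiemannInt p2 - L2)) by ring.
    eapply Rle_lt_trans; [apply Rabs_triang|]. rewrite Rabs_mult.
    assert (Rabs c * Rabs (RiemannInt p2 - L2) <= (Rabs c + 1) * (eps / (2 * (Rabs c + 1)))).
    { apply Rmult_le_compat; try apply Rabs_pos; lra. }
    assert ((Rabs c + 1) * (eps / (2 * (Rabs c + 1))) = eps / 2).
    { field. pose proof (Rabs_pos c); lra. }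
    lra.
Qed.

Lemma II_le g h L1 L2 : (forall z, g z <= h z) -> improper_int g L1 -> improper_int h L2 -> L1 <= L2.
Proof.
  intros Hle [I1 H1] [I2 H2].
  destruct (Rle_dec L1 L2) as [|Hn]; auto. exfalso.
  set (e := (L1 - L2)/2).
  destruct (H1 e ltac:(unfold e; lra)) as [M1 [HM1 H1']].
  destruct (H2 e ltac:(unfold e; lra)) as [M2 [HM2 H2']].
  destruct (I1 (-(M1+M2)) (M1+M2) ltac:(lra)) as [p1].
  destruct (I2 (-(M1+M2)) (M1+M2) ltac:(lra)) as [p2].
  specialize (H1' _ _ p1 ltac:(lra) ltac:(lra)).
  specialize (H2' _ _ p2 ltac:(lra) ltac:(lra)).
  assert (RiemannInt p1 <= RiemannInt p2) by (apply RiemannInt_P19; auto; lra).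
  apply Rabs_def2 in H1'; apply Rabs_def2 in H2'. unfold e in *; lra.
Qed.

Lemma II_scal g L c : improper_int g L -> improper_int (fun z => c * g z) (c * L).
Proof.
  intro H. assert (H2 := II_lin g g L L (c - 1) H H).
  eapply II_ext; [|replace (c * L) with (L + (c-1) * L) by ring; exact H2].
  intro; simpl; ring.
Qed.

Lemma II_minus g1 g2 L1 L2 : improper_int g1 L1 -> improper_int g2 L2 ->
  improper_int (fun z => g1 z - g2 z) (L1 - L2).
Proof.
  intros H1 H2. assert (H := II_lin g1 g2 L1 L2 (-1) H1 H2).
  eapply II_ext; [|replace (L1 - L2) with (L1 + -1 * L2) by ring; exact H].
  intro; simpl; ring.
Qed.

Lemma II_plus g1 g2 L1 L2 : improper_int g1 L1 -> improper_int g2 L2 ->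
  improper_int (fun z => g1 z + g2 z) (L1 + L2).
Proof.
  intros H1 H2. assert (H := II_lin g1 g2 L1 L2 1 H1 H2).
  eapply II_ext; [|replace (L1 + L2) with (L1 + 1 * L2) by ring; exact H].
  intro; simpl; ring.
Qed.

Lemma fsum_ext n g h : (forall i, (i < n)%nat -> g i = h i) -> fsum n g = fsum n h.
Proof. induction n; simpl; intros; auto. rewrite IHn, H; auto; lia. Qed.
Lemma fprod_ext n g h : (forall i, (i < n)%nat -> g i = h i) -> fprod n g = fprod n h.
Proof. induction n; simpl; intros; auto. rewrite IHn, H; auto; lia. Qed.

Lemma fsum_plus n g h : fsum n (fun i => g i + h i) = fsum n g + fsum n h.
Proof. induction n; simpl; [ring|rewrite IHn; ring]. Qed.
Lemma fsum_scal n c g : fsum n (fun i => c * g i) = c * fsum n g.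
Proof. induction n; simpl; [ring|rewrite IHn; ring]. Qed.
Lemma fsum_zero n : fsum n (fun _ => 0) = 0.
Proof. induction n; simpl; [ring|rewrite IHn; ring]. Qed.
Lemma fsum_const n c : fsum n (fun _ => c) = INR n * c.
Proof. induction n; simpl fsum; [simpl; ring|rewrite IHn, S_INR; ring]. Qed.

Lemma fsum_le n g h : (forall i, (i < n)%nat -> g i <= h i) -> fsum n g <= fsum n h.
Proof. induction n; simpl; intros; [lra|]. apply Rplus_le_compat; auto. Qed.

Lemma fsum_abs n g : Rabs (fsum n g) <= fsum n (fun i => Rabs (g i)).
Proof.
  induction n; simpl. rewrite Rabs_R0; lra.
  eapply Rle_trans; [apply Rabs_triang|lra].
Qed.

Lemma fsum_single n a g : (a < n)%nat -> fsum n (fun j => if Nat.eqb j a then g j else 0) = g a.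
Proof.
  induction n; intros Ha; [lia|]. simpl.
  destruct (Nat.eq_dec a n) as [->|Hne].
  - rewrite Nat.eqb_refl.
    rewrite (fsum_ext n _ (fun _ => 0)); [rewrite fsum_zero; ring|].
    intros i Hi. destruct (Nat.eqb_spec i n); [lia|auto].
  - rewrite IHn by lia. destruct (Nat.eqb_spec n a); [lia|ring].
Qed.

Lemma fsum_shift n g : fsum (S n) g = g O + fsum n (fun i => g (S i)).
Proof. induction n; simpl in *; [ring|]. rewrite IHn. ring. Qed.

Lemma fsum_swap n m (g : nat -> nat -> R) :
  fsum n (fun i => fsum m (fun j => g i j)) = fsum m (fun j => fsum n (fun i => g i j)).
Proof.
  induction n; simpl. rewrite fsum_zero; auto.
  rewrite IHn, <- fsum_plus. auto.
Qed.

Lemma fsum_nonneg n g : (forall i, (i < n)%nat -> 0 <= g i) -> 0 <= fsum n g.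
Proof. intros; rewrite <- (fsum_zero n); apply fsum_le; auto. Qed.

Lemma fprod_01 n g : (forall i, (i < n)%nat -> 0 <= g i <= 1) -> 0 <= fprod n g <= 1.
Proof.
  induction n; simpl; intros; [lra|].
  assert (A := IHn ltac:(intros; apply H; lia)). assert (B := H n ltac:(lia)).
  split; [apply Rmult_le_pos; lra|]. replace 1 with (1*1) by ring.
  apply Rmult_le_compat; lra.
Qed.

Lemma fprod_diff n a b : (forall i, (i < n)%nat -> 0 <= a i <= 1) ->
  (forall i, (i < n)%nat -> 0 <= b i <= 1) ->
  Rabs (fprod n b - fprod n a) <= fsum n (fun i => Rabs (b i - a i)).
Proof.
  induction n; intros Ha Hb; simpl. rewrite Rminus_diag, Rabs_R0; lra.
  assert (IH := IHn ltac:(intros; apply Ha; lia) ltac:(intros; apply Hb; lia)).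
  assert (A := fprod_01 n a ltac:(intros; apply Ha; lia)).
  assert (B := fprod_01 n b ltac:(intros; apply Hb; lia)).
  assert (An := Ha n ltac:(lia)). assert (Bn := Hb n ltac:(lia)).
  replace (fprod n b * b n - fprod n a * a n) with
    ((fprod n b - fprod n a) * b n + fprod n a * (b n - a n)) by ring.
  eapply Rle_trans; [apply Rabs_triang|]. rewrite !Rabs_mult.
  rewrite (Rabs_right (b n)) by lra. rewrite (Rabs_right (fprod n a)) by lra.
  apply Rplus_le_compat.
  - replace (fsum n (fun i => Rabs (b i - a i))) with (fsum n (fun i => Rabs (b i - a i)) * 1) by ring.
    apply Rmult_le_compat; try lra; apply Rabs_pos.
  - replace (Rabs (b n - a n)) with (1 * Rabs (b n - a n)) at 2 by ring.
    apply Rmult_le_compat_r; [apply Rabs_pos|lra].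
Qed.

Definition fprodx (n i : nat) (a : nat -> R) := fprod n (fun v => if Nat.eqb v i then 1 else a v).

Lemma fprod_expand n a c :
  (forall i, (i < n)%nat -> 0 <= a i <= 1) ->
  (forall i, (i < n)%nat -> 0 <= a i + c i <= 1) ->
  Rabs (fprod n (fun v => a v + c v) - fprod n a - fsum n (fun i => c i * fprodx n i a))
    <= (fsum n (fun i => Rabs (c i))) ^ 2.
Proof.
  induction n; intros Ha Hc; simpl fprod; simpl fsum.
  - replace (1 - 1 - 0) with 0 by ring. rewrite Rabs_R0; lra.
  - assert (IH := IHn ltac:(intros; apply Ha; lia) ltac:(intros; apply Hc; lia)).
    assert (Hsum : fsum n (fun i => c i * fprodx (S n) i a) =
                   fsum n (fun i => c i * fprodx n i a) * a n).
    { rewrite Rmult_comm, <- fsum_scal. apply fsum_ext. intros i Hi.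
      unfold fprodx. simpl. destruct (Nat.eqb_spec n i); [lia|]. ring. }
    assert (Hlast : fprodx (S n) n a = fprod n a).
    { unfold fprodx; simpl. rewrite Nat.eqb_refl. rewrite Rmult_1_r. apply fprod_ext.
      intros i Hi. destruct (Nat.eqb_spec i n); [lia|auto]. }
    rewrite Hsum, Hlast.
    set (B := fprod n (fun v => a v + c v)). set (A := fprod n a).
    set (Sm := fsum n (fun i => c i * fprodx n i a)). set (T := fsum n (fun i => Rabs (c i))).
    assert (An := Ha n ltac:(lia)). assert (Cn := Hc n ltac:(lia)).
    assert (HBA : Rabs (B - A) <= T).
    { unfold B, A, T. rewrite (fsum_ext n _ (fun i => Rabs ((a i + c i) - a i))).
      apply fprod_diff; intros; [apply Ha|apply Hc]; lia.
      intros; f_equal; ring. }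
    assert (T0 : 0 <= T) by (unfold T; apply fsum_nonneg; intros; apply Rabs_pos).
    replace (B * (a n + c n) - A * a n - (Sm * a n + c n * A)) with
      ((B - A - Sm) * a n + c n * (B - A)) by ring.
    eapply Rle_trans; [apply Rabs_triang|]. rewrite !Rabs_mult.
    rewrite (Rabs_right (a n)) by lra.
    assert (Rabs (B - A - Sm) * a n <= T ^ 2).
    { assert (IH' : Rabs (B - A - Sm) <= T ^ 2) by exact IH.
      replace (T^2) with (T^2 * 1) by ring. apply Rmult_le_compat; try lra; apply Rabs_pos. }
    assert (Rabs (c n) * Rabs (B - A) <= Rabs (c n) * T) by (apply Rmult_le_compat_l; [apply Rabs_pos|lra]).
    pose proof (Rabs_pos (c n)). nra.
Qed.

Lemma small_zero x : (forall e, 0 < e -> Rabs x < e) -> x = 0.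
Proof.
  intros H. destruct (Req_dec x 0); auto.
  assert (0 < Rabs x) by (apply Rabs_pos_lt; auto).
  specialize (H _ H1). lra.
Qed.


Lemma cont_pow g x j : continuity_pt g x -> continuity_pt (fun y => g y ^ j) x.
Proof.
  intro H. induction j; simpl.
  - apply continuity_pt_const. intros a b; auto.
  - apply (continuity_pt_mult g (fun y => g y ^ j)); auto.
Qed.

Lemma dpl_mult g h x a b : derivable_pt_lim g x a -> derivable_pt_lim h x b ->
  derivable_pt_lim (fun z => g z * h z) x (a * h x + g x * b).
Proof. exact (derivable_pt_lim_mult g h x a b). Qed.

Lemma II_deriv G g LA LB : (forall x, derivable_pt_lim G x (g x)) -> (forall x, continuity_pt g x) ->
  (forall e, 0 < e -> exists M, forall x, x <= - M -> Rabs (G x - LA) <= e) ->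
  (forall e, 0 < e -> exists M, forall x, M <= x -> Rabs (G x - LB) <= e) ->
  improper_int g (LB - LA).
Proof.
  intros Hd Hc HA HB. split.
  - intros a b Hab. constructor. apply continuity_implies_RiemannInt; auto.
  - intros e He. destruct (HA (e/3) ltac:(lra)) as [MA HMA]. destruct (HB (e/3) ltac:(lra)) as [MB HMB].
    exists (Rabs MA + Rabs MB + 1). split. pose proof (Rabs_pos MA); pose proof (Rabs_pos MB); lra.
    intros a b pr Ha Hb.
    assert (HRI : RiemannInt pr = G b - G a).
    { rewrite <- RInt_Reals. apply (is_RInt_unique (V:=R_CompleteNormedModule)).
      apply (is_RInt_derive (V:=R_CompleteNormedModule) G g).
      - intros; apply is_derive_Reals; auto.
      - intros; apply continuity_pt_filterlim; auto. }
    rewrite HRI. pose proof (Rle_abs MA); pose proof (Rle_abs MB). pose proof (Rle_abs (-MA)).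
    rewrite Rabs_Ropp in H1.
    specialize (HMA a ltac:(pose proof (Rabs_pos MB); lra)).
    specialize (HMB b ltac:(pose proof (Rabs_pos MA); lra)).
    apply Rabs_le_between in HMA; apply Rabs_le_between in HMB. apply Rabs_def1; lra.
Qed.


Definition lsum (l : list nat) (g : nat -> R) : R := fold_right (fun j acc => g j + acc) 0 l.

Lemma NoDup_remove_nat l y : NoDup l -> NoDup (remove Nat.eq_dec y l).
Proof.
  induction 1; simpl; [constructor|].
  destruct (Nat.eq_dec y x); auto. constructor; auto.
  intro Hin. apply in_remove in Hin. tauto.
Qed.

Lemma length_remove_nat l y : NoDup l -> In y l -> length (remove Nat.eq_dec y l) = (length l - 1)%nat.
Proof.
  induction 1; simpl; [tauto|]. intros [->|Hin].
  - destruct (Nat.eq_dec y y); [|tauto]. rewrite notin_remove; auto. lia.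
  - destruct (Nat.eq_dec y x) as [->|]; [tauto|]. simpl. rewrite IHNoDup; auto.
    destruct l; simpl in *; [tauto|lia].
Qed.

Lemma lsum_remove l y g : NoDup l -> In y l -> lsum l g = g y + lsum (remove Nat.eq_dec y l) g.
Proof.
  induction 1; simpl; [tauto|]. intros [->|Hin].
  - destruct (Nat.eq_dec y y); [|tauto]. rewrite notin_remove; auto.
  - destruct (Nat.eq_dec y x) as [->|]; [tauto|]. simpl. rewrite IHNoDup; auto. ring.
Qed.

Lemma lsum_nth l g : lsum l g = fsum (length l) (fun p => g (nth p l 0%nat)).
Proof.
  induction l; [simpl; auto|]. change (lsum (a :: l) g) with (g a + lsum l g). change (length (a :: l)) with (S (length l)). rewrite fsum_shift. simpl nth. rewrite IHl. auto.
Qed.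

Lemma fsum_indicator n l g : NoDup l -> (forall j, In j l -> (j < n)%nat) ->
  fsum n (fun j => if in_dec Nat.eq_dec j l then g j else 0) = lsum l g.
Proof.
  induction 1; intros Hn; simpl. { rewrite fsum_zero; auto. }
  rewrite <- IHNoDup by (intros; apply Hn; simpl; auto).
  rewrite <- (fsum_single n x g) by (apply Hn; simpl; auto).
  rewrite <- fsum_plus. apply fsum_ext. intros j Hj.
  destruct (Nat.eq_dec x j) as [->|Hne].
  - rewrite Nat.eqb_refl. destruct (in_dec Nat.eq_dec j l); [tauto|]. ring.
  - destruct (Nat.eqb_spec j x); [congruence|].
    destruct (in_dec Nat.eq_dec j l); ring.
Qed.


Lemma fprod_const n c : fprod n (fun _ => c) = c ^ n.
Proof. induction n; simpl; auto. rewrite IHn. ring. Qed.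

Lemma fprod_out1 n i c : (i < n)%nat -> fprod n (fun v => if Nat.eqb v i then 1 else c) = c ^ (pred n).
Proof.
  induction n; intro Hi; [lia|]. simpl fprod.
  destruct (Nat.eqb_spec n i) as [->|Hne].
  - rewrite (fprod_ext i _ (fun _ => c)). rewrite fprod_const. simpl. ring.
    intros v Hv. destruct (Nat.eqb_spec v i); [lia|auto].
  - rewrite IHn by lia. destruct n; [lia|]. simpl. ring.
Qed.

Lemma fprod_out2 n i j c : (i < n)%nat -> (j < n)%nat -> i <> j ->
  fprod n (fun v => if (Nat.eqb v i || Nat.eqb v j)%bool then 1 else c) = c ^ (pred (pred n)).
Proof.
  induction n; intros Hi Hj Hij; [lia|]. simpl fprod.
  destruct (Nat.eqb_spec n i) as [->|Hne].
  - simpl. rewrite (fprod_ext i _ (fun v => if Nat.eqb v j then 1 else c)).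
    rewrite fprod_out1 by lia. ring.
    intros v Hv. destruct (Nat.eqb_spec v i); [lia|auto].
  - destruct (Nat.eqb_spec n j) as [->|Hne2].
    + simpl. rewrite (fprod_ext j _ (fun v => if Nat.eqb v i then 1 else c)).
      rewrite fprod_out1 by lia. ring.
      intros v Hv. destruct (Nat.eqb_spec v j); [lia|]. rewrite Bool.orb_false_r. auto.
    + simpl. rewrite IHn by lia. destruct n; [lia|]. destruct n; [lia|]. simpl. ring.
Qed.


Lemma dpl_ext g1 g2 x l : (forall t, g1 t = g2 t) -> derivable_pt_lim g1 x l -> derivable_pt_lim g2 x l.
Proof. intros E H. replace g2 with g1; auto. apply functional_extensionality; auto. Qed.

Lemma dpl_loc g1 g2 l : (exists d, 0 < d /\ forall t, Rabs t < d -> g1 t = g2 t) ->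
  derivable_pt_lim g1 0 l -> derivable_pt_lim g2 0 l.
Proof.
  intros [d [Hd E]] H eps He. destruct (H eps He) as [d1 H1].
  assert (Hm : 0 < Rmin d d1) by (apply Rmin_glb_lt; auto; apply cond_pos).
  exists (mkposreal _ Hm). intros h Hh Hhd. simpl in Hhd.
  pose proof (Rmin_l d d1); pose proof (Rmin_r d d1).
  rewrite <- !E. apply H1; auto; lra.
  rewrite Rabs_R0; lra. rewrite Rplus_0_l; lra.
Qed.

Lemma dpl_neg g l : derivable_pt_lim g 0 l -> derivable_pt_lim (fun t => g (- t)) 0 (- l).
Proof.
  intro H. replace (- l) with (l * -1) by ring.
  apply (derivable_pt_lim_comp (fun t => - t) g 0 (-1) l).
  - replace (-1) with (- (1)) by ring. apply (derivable_pt_lim_opp (fun t => t)). apply derivable_pt_lim_id.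
  - replace (- 0) with 0 by ring. auto.
Qed.

Lemma dpl_negln g l : derivable_pt_lim g 0 l -> 0 < g 0 ->
  derivable_pt_lim (fun t => - ln (g t)) 0 (- (l / g 0)).
Proof.
  intros H Hp. apply (derivable_pt_lim_opp (fun t => ln (g t))).
  replace (l / g 0) with (/ g 0 * l) by (unfold Rdiv; ring).
  apply (derivable_pt_lim_comp g ln 0 l (/ g 0)); auto. apply derivable_pt_lim_ln; auto.
Qed.

Lemma dpl_divf u w a b : derivable_pt_lim u 0 a -> derivable_pt_lim w 0 b -> w 0 <> 0 ->
  derivable_pt_lim (fun t => u t / w t) 0 ((a * w 0 - b * u 0) / (w 0)²).
Proof. intros Hu Hw Hn. exact (derivable_pt_lim_div u w 0 a b Hu Hw Hn). Qed.

Lemma dpl_fsum k (g : nat -> R -> R) l : (forall i, (i < k)%nat -> derivable_pt_lim (g i) 0 (l i)) ->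
  derivable_pt_lim (fun t => fsum k (fun i => g i t)) 0 (fsum k l).
Proof.
  induction k; intros H; simpl.
  - apply derivable_pt_lim_const.
  - apply (derivable_pt_lim_plus (fun t => fsum k (fun i => g i t)) (g k)). apply IHk; auto. apply H; lia.
Qed.

Lemma dpl_const_loc g : (exists d, 0 < d /\ forall t, Rabs t < d -> g t = g 0) -> derivable_pt_lim g 0 0.
Proof.
  intro H. apply (dpl_loc (fun _ => g 0)).
  destruct H as [d [Hd E]]. exists d; split; auto. intros; symmetry; auto.
  apply derivable_pt_lim_const.
Qed.


Lemma fsum_S n g : fsum (S n) g = fsum n g + g n.
Proof. reflexivity. Qed.

Lemma aux_cs X W Y a : 0 <= W -> 0 <= Y -> X * X <= W * Y -> 2 * X * a <= W * a * a + Y.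
Proof.
  intros HW HY HX. destruct (Req_dec W 0) as [->|HW0].
  - assert (X = 0) by nra. subst. lra.
  - assert (0 < W) by lra.
    assert (W * (W * a * a + Y - 2 * X * a) >= 0).
    { replace (W * (W * a * a + Y - 2 * X * a)) with ((W * a - X) * (W * a - X) + (W * Y - X * X)) by ring. pose proof (Rle_0_sqr (W * a - X)). unfold Rsqr in *. lra. }
    nra.
Qed.

Lemma wcs n w a : (forall j, (j < n)%nat -> 0 <= w j) ->
  (fsum n (fun j => w j * a j)) ^ 2 <= fsum n w * fsum n (fun j => w j * a j ^ 2).
Proof.
  induction n; intros Hw. simpl. lra. rewrite !fsum_S.
  assert (IH := IHn ltac:(intros; apply Hw; lia)).
  assert (W0 := fsum_nonneg n w ltac:(intros; apply Hw; lia)).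
  assert (Y0 := fsum_nonneg n (fun j => w j * a j ^ 2) ltac:(intros; apply Rmult_le_pos; [apply Hw; lia|apply pow2_ge_0])).
  set (X := fsum n (fun j => w j * a j)) in *. set (W := fsum n w) in *. set (Y := fsum n (fun j => w j * a j ^ 2)) in *.
  assert (Hwn := Hw n ltac:(lia)).
  assert (C := aux_cs X W Y (a n) W0 Y0 ltac:(replace (X * X) with (X ^ 2) by ring; exact IH)).
  assert (w n * (2 * X * a n) <= w n * (W * a n * a n + Y)) by (apply Rmult_le_compat_l; auto).
  replace ((X + w n * a n) ^ 2) with (X ^ 2 + w n * (2 * X * a n) + w n * w n * a n * a n) by ring.
  replace ((W + w n) * (Y + w n * a n ^ 2)) with (W * Y + w n * (W * a n * a n + Y) + w n * w n * a n * a n) by ring.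
  lra.
Qed.

Lemma schur n (H : nat -> nat -> R) B x : 0 <= B ->
  (forall i, (i < n)%nat -> fsum n (fun j => Rabs (H i j)) <= B) ->
  (forall j, (j < n)%nat -> fsum n (fun i => Rabs (H i j)) <= B) ->
  fsum n (fun i => (fsum n (fun j => H i j * x j)) ^ 2) <= B * B * fsum n (fun j => x j ^ 2).
Proof.
  intros HB HR HC.
  assert (Step : forall i, (i < n)%nat -> (fsum n (fun j => H i j * x j)) ^ 2 <= B * fsum n (fun j => Rabs (H i j) * x j ^ 2)).
  { intros i Hi.
    assert (A1 : (fsum n (fun j => H i j * x j)) ^ 2 <= (fsum n (fun j => Rabs (H i j) * Rabs (x j))) ^ 2).
    { rewrite <- !Rsqr_pow2. apply Rsqr_le_abs_1. eapply Rle_trans; [apply fsum_abs|].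
      rewrite (Rabs_right (fsum n (fun j => Rabs (H i j) * Rabs (x j)))).
      apply fsum_le; intros; rewrite Rabs_mult; lra.
      apply Rle_ge, fsum_nonneg; intros; apply Rmult_le_pos; apply Rabs_pos. }
    eapply Rle_trans; [exact A1|]. eapply Rle_trans; [apply wcs; intros; apply Rabs_pos|].
    cbv beta.     rewrite (fsum_ext n (fun j => Rabs (H i j) * Rabs (x j) ^ 2) (fun j => Rabs (H i j) * x j ^ 2)).
    apply Rmult_le_compat_r. apply fsum_nonneg; intros; apply Rmult_le_pos; [apply Rabs_pos|apply pow2_ge_0].
    apply HR; auto.
    intros j _. rewrite <- Rsqr_pow2, <- Rsqr_pow2, <- Rsqr_abs. auto. }
  eapply Rle_trans; [apply fsum_le; exact Step|].
  rewrite fsum_scal. rewrite Rmult_assoc. apply Rmult_le_compat_l; auto.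
  rewrite (fsum_swap n n (fun i j => Rabs (H i j) * x j ^ 2)).
  rewrite <- fsum_scal. apply fsum_le. intros j Hj.
  rewrite (fsum_ext n (fun i => Rabs (H i j) * x j ^ 2) (fun i => x j ^ 2 * Rabs (H i j))) by (intros; ring).
  rewrite fsum_scal. rewrite Rmult_comm. apply Rmult_le_compat_r; [apply pow2_ge_0|]. apply HC; auto.
Qed.

Section FF.
Variables F f f' : R -> R.
Hypothesis hf' : forall x, derivable_pt_lim f x (f' x).
Hypothesis hcdf : is_cdf_with_density F f.
Hypothesis hf'c : continuity f'.
Hypothesis hlim : forall eps, 0 < eps -> exists M, forall x, M <= Rabs x -> Rabs (f x) < eps.

Lemma f_cont x : continuity_pt f x.
Proof. apply derivable_continuous_pt. exists (f' x). apply hf'. Qed.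

Lemma f_nonneg x : 0 <= f x.
Proof. destruct hcdf as [H _]; auto. Qed.

Lemma f_int a b : Riemann_integrable f a b.
Proof.
  destruct (Rle_dec a b).
  - apply continuity_implies_RiemannInt; auto. intros; apply f_cont.
  - apply RiemannInt_P1. apply continuity_implies_RiemannInt; [lra|]. intros; apply f_cont.
Qed.

Lemma f_bounded : exists Mf, 0 < Mf /\ forall x, f x <= Mf.
Proof.
  destruct (hlim 1 ltac:(lra)) as [M HM].
  destruct (continuity_ab_maj f (- Rabs M) (Rabs M) ltac:(pose proof (Rabs_pos M); lra)
     ltac:(intros; apply f_cont)) as [xm [Hxm _]].
  exists (Rmax 1 (f xm) + 1). split. pose proof (Rmax_l 1 (f xm)); lra.
  intro x. destruct (Rle_dec (Rabs M) (Rabs x)).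
  - assert (M <= Rabs x) by (pose proof (Rle_abs M); lra).
    specialize (HM x H). apply Rabs_def2 in HM. pose proof (Rmax_l 1 (f xm)); lra.
  - assert (Hx : Rabs x < Rabs M) by lra. apply Rabs_def2 in Hx.
    assert (f x <= f xm) by (apply Hxm; lra).
    pose proof (Rmax_r 1 (f xm)); lra.
Qed.

Lemma f_unif eps : 0 < eps -> exists d, 0 < d /\ forall a b, Rabs (a - b) < d -> Rabs (f a - f b) <= eps.
Proof.
  intro He. destruct (hlim (eps/2) ltac:(lra)) as [M HM].
  set (K := Rabs M + 1).
  destruct (Heine_cor2 (f := f) (a := -K) (b := K) ltac:(intros; apply f_cont) (mkposreal eps He)) as [d Hd].
  exists (Rmin d 1). split. destruct d; simpl; apply Rmin_glb_lt; lra.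
  intros a b Hab. pose proof (Rmin_l d 1); pose proof (Rmin_r d 1).
  pose proof (Rle_abs M).
  destruct (Rle_dec (Rabs a) K) as [Ha|Ha]; destruct (Rle_dec (Rabs b) K) as [Hb|Hb].
  - left. apply Hd; try (apply Rabs_le_between; auto). lra.
  - assert (M <= Rabs a).
    { assert (Rabs b <= Rabs a + Rabs (b - a)).
      { replace b with (a + (b - a)) at 1 by ring. apply Rabs_triang. }
      rewrite Rabs_minus_sym in Hab. unfold K in *; lra. }
    assert (M <= Rabs b) by (unfold K in *; lra).
    assert (H4 := HM a ltac:(auto)); specialize (HM b ltac:(auto)).
    apply Rabs_def2 in HM. apply Rabs_def2 in H4.
    apply Rabs_le; lra.
  - assert (M <= Rabs b).
    { assert (Rabs a <= Rabs b + Rabs (a - b)).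
      { replace a with (b + (a - b)) at 1 by ring. apply Rabs_triang. }
      unfold K in *; lra. }
    assert (M <= Rabs a) by (unfold K in *; lra).
    assert (H4 := HM a ltac:(auto)); specialize (HM b ltac:(auto)).
    apply Rabs_def2 in HM. apply Rabs_def2 in H4.
    apply Rabs_le; lra.
  - assert (M <= Rabs a) by (unfold K in *; lra).
    assert (M <= Rabs b) by (unfold K in *; lra).
    assert (H4 := HM a ltac:(auto)); specialize (HM b ltac:(auto)).
    apply Rabs_def2 in HM. apply Rabs_def2 in H4.
    apply Rabs_le; lra.
Qed.

Lemma F_diff a b (pr : Riemann_integrable f a b) : a <= b -> F b - F a = RiemannInt pr.
Proof.
  intro Hab. apply Rminus_diag_uniq. apply small_zero. intros e He.
  destruct hcdf as [_ [_ H3]].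
  destruct (H3 a) as [Ia Ha]. destruct (H3 b) as [Ib Hb].
  destruct (Ha (e/2) ltac:(lra)) as [Ma [HMa Ha']].
  destruct (Hb (e/2) ltac:(lra)) as [Mb [HMb Hb']].
  set (c := - (Ma + Mb + Rabs a)). pose proof (Rabs_pos a). pose proof (Rle_abs (-a)). rewrite Rabs_Ropp in H0.
  destruct (Ia c ltac:(unfold c; lra)) as [pa]. destruct (Ib c ltac:(unfold c; lra)) as [pb].
  assert (Hc1 : c <= - Ma) by (unfold c; lra). assert (Hc2 : c <= - Mb) by (unfold c; lra).
  specialize (Ha' c pa Hc1). specialize (Hb' c pb Hc2).
  rewrite <- (RiemannInt_P26 pa pr pb) in Hb'.
  apply Rabs_def2 in Ha'. apply Rabs_def2 in Hb'. apply Rabs_def1; lra.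
Qed.

Lemma RI_nonneg a b (pr : Riemann_integrable f a b) : a <= b -> 0 <= RiemannInt pr.
Proof.
  intro Hab. assert (H := RiemannInt_P19 (RiemannInt_P14 a b 0) pr Hab).
  rewrite RiemannInt_P15 in H. assert (0 * (b - a) <= RiemannInt pr); [|lra].
  apply H. intros; unfold fct_cte; apply f_nonneg.
Qed.

Lemma le_eps y : (forall e, 0 < e -> y <= e) -> y <= 0.
Proof.
  intros H. destruct (Rle_dec y 0); auto. specialize (H (y/2) ltac:(lra)). lra.
Qed.

Lemma F_nonneg x : 0 <= F x.
Proof.
  assert (- F x <= 0); [|lra]. apply le_eps. intros e He.
  destruct hcdf as [_ [_ H3]]. destruct (H3 x) as [Ix Hx].
  destruct (Hx e He) as [M [HM Hx']].
  pose proof (Rabs_pos x). pose proof (Rle_abs (-x)). rewrite Rabs_Ropp in H0.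
  destruct (Ix (-(M + Rabs x)) ltac:(lra)) as [p].
  specialize (Hx' _ p ltac:(lra)). apply Rabs_def2 in Hx'.
  pose proof (RI_nonneg _ _ p ltac:(lra)). lra.
Qed.

Lemma F_mono a b : a <= b -> F a <= F b.
Proof.
  intro Hab. pose proof (F_diff a b (f_int a b) Hab). pose proof (RI_nonneg a b (f_int a b) Hab). lra.
Qed.

Lemma F_le1 x : F x <= 1.
Proof.
  assert (F x - 1 <= 0); [|lra]. apply le_eps. intros e He.
  destruct hcdf as [_ [[I2 H2] H3]].
  destruct (H2 (e/2) ltac:(lra)) as [M2 [HM2 H2']].
  set (b := M2 + Rabs x + 1). pose proof (Rle_abs x). pose proof (Rabs_pos x).
  destruct (H3 b) as [Ib Hb]. destruct (Hb (e/2) ltac:(lra)) as [Mb [HMb Hb']].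
  destruct (Ib (-(Mb + M2)) ltac:(unfold b; lra)) as [p].
  specialize (Hb' _ p ltac:(lra)). specialize (H2' _ _ p ltac:(lra) ltac:(unfold b; lra)).
  apply Rabs_def2 in Hb'. apply Rabs_def2 in H2'.
  pose proof (F_mono x b ltac:(unfold b; lra)). lra.
Qed.

Lemma F_low e : 0 < e -> exists M, forall x, x <= - M -> F x <= e.
Proof.
  intro He. destruct hcdf as [_ [[I2 H2] _]].
  destruct (H2 e He) as [M2 [HM2 H2']]. exists M2. intros x Hx.
  pose proof (F_diff x M2 (f_int x M2) ltac:(lra)).
  specialize (H2' x M2 (f_int x M2) Hx ltac:(lra)). apply Rabs_def2 in H2'.
  pose proof (F_le1 M2). lra.
Qed.

Lemma F_high e : 0 < e -> exists M, forall x, M <= x -> 1 - e <= F x.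
Proof.
  intro He. destruct hcdf as [_ [[I2 H2] _]].
  destruct (H2 e He) as [M2 [HM2 H2']]. exists M2. intros x Hx.
  pose proof (F_diff (-M2) x (f_int (-M2) x) ltac:(lra)).
  specialize (H2' (-M2) x (f_int (-M2) x) ltac:(lra) Hx). apply Rabs_def2 in H2'.
  pose proof (F_nonneg (-M2)). lra.
Qed.

Lemma F_deriv x : derivable_pt_lim F x (f x).
Proof.
  apply is_derive_Reals.
  apply (is_derive_ext_loc (fun y => F (x-1) + RInt f (x-1) y)).
  - exists (mkposreal 1 ltac:(lra)). intros y Hy. cbv [ball] in Hy; simpl in Hy.
    unfold AbsRing_ball, abs, minus, plus, opp in Hy; simpl in Hy.
    apply Rabs_def2 in Hy.
    rewrite (RInt_Reals f (x-1) y (f_int _ _)). rewrite <- F_diff; [simpl; ring|lra].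
  - apply is_derive_Reals. replace (f x) with (0 + f x) by ring.
    apply (derivable_pt_lim_plus (fun _ => F (x-1)) (fun y => RInt f (x-1) y)).
    apply derivable_pt_lim_const. apply is_derive_Reals.
    apply is_derive_RInt with (x-1).
    + apply filter_forall. intros b. apply (RInt_correct (V:=R_CompleteNormedModule)). apply (ex_RInt_continuous (V:=R_CompleteNormedModule)).
      intros; apply continuity_pt_filterlim; apply f_cont.
    + apply continuity_pt_filterlim; apply f_cont.
Qed.

Lemma F_lip Mf : (forall x, f x <= Mf) -> forall a b, Rabs (F a - F b) <= Mf * Rabs (a - b).
Proof.
  intros HM a b.
  destruct (Rtotal_order a b) as [Hab|[->|Hab]].
  - destruct (MVT_cor2 F f a b Hab (fun c _ => F_deriv c)) as [c [Hc _]].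
    rewrite Rabs_minus_sym, Hc, (Rabs_minus_sym a b), Rabs_mult.
    rewrite (Rabs_right (f c)) by (apply Rle_ge, f_nonneg).
    apply Rmult_le_compat_r; [apply Rabs_pos|auto].
  - rewrite !Rminus_diag, Rabs_R0; lra.
  - destruct (MVT_cor2 F f b a Hab (fun c _ => F_deriv c)) as [c [Hc _]].
    rewrite Hc, Rabs_mult.
    rewrite (Rabs_right (f c)) by (apply Rle_ge, f_nonneg).
    try rewrite (Rabs_minus_sym b a).
    apply Rmult_le_compat_r; [apply Rabs_pos|auto].
Qed.

Lemma F_incr e : 0 < e -> exists d, 0 < d /\ forall a t, Rabs t < d ->
  Rabs (F (a + t) - F a - t * f a) <= Rabs t * e.
Proof.
  intro He. destruct (f_unif e He) as [d [Hd Hu]]. exists d. split; auto.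
  intros a t Ht.
  destruct (Rtotal_order t 0) as [Hn|[->|Hp]].
  - destruct (MVT_cor2 F f (a+t) a ltac:(lra) (fun c _ => F_deriv c)) as [c [Hc Hc2]].
    replace (F (a + t) - F a - t * f a) with (- (F a - F (a+t)) - t * f a) by ring.
    rewrite Hc. replace (- (f c * (a - (a + t))) - t * f a) with (t * (f c - f a)) by ring.
    rewrite Rabs_mult. apply Rmult_le_compat_l; [apply Rabs_pos|]. apply Hu.
    apply Rabs_def2 in Ht. apply Rabs_def1; lra.
  - rewrite Rplus_0_r. replace (F a - F a - 0 * f a) with 0 by ring. rewrite !Rabs_R0; lra.
  - destruct (MVT_cor2 F f a (a+t) ltac:(lra) (fun c _ => F_deriv c)) as [c [Hc Hc2]].
    rewrite Hc. replace (f c * (a + t - a) - t * f a) with (t * (f c - f a)) by ring.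
    rewrite Rabs_mult. apply Rmult_le_compat_l; [apply Rabs_pos|]. apply Hu.
    apply Rabs_def2 in Ht. apply Rabs_def1; lra.
Qed.

Lemma F_cont x : continuity_pt F x.
Proof. apply derivable_continuous_pt. exists (f x). apply F_deriv. Qed.

Lemma pow_01 y j : 0 <= y <= 1 -> 0 <= y ^ j <= 1.
Proof.
  intro H. induction j; simpl; [lra|]. split; [apply Rmult_le_pos; lra|].
  replace 1 with (1*1) by ring. apply Rmult_le_compat; lra.
Qed.

Lemma bernoulli_01 y j : 0 <= y <= 1 -> 1 - y ^ j <= INR j * (1 - y).
Proof.
  intro H. induction j; simpl pow; [simpl; lra|]. rewrite S_INR.
  pose proof (pow_01 y j H). nra.
Qed.

Lemma F01 x : 0 <= F x <= 1.
Proof. split; [apply F_nonneg|apply F_le1]. Qed.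

Lemma P_value m : improper_int (fun z => F z ^ m * f z) (/ INR (S m)).
Proof.
  assert (Hk : 0 < INR (S m)) by (apply lt_0_INR; lia).
  eapply II_ext; [|replace (/ INR (S m)) with (/ INR (S m) - 0) by ring;
     apply (II_deriv (fun z => / INR (S m) * F z ^ (S m)) (fun z => / INR (S m) * (INR (S m) * F z ^ m * f z)))].
  - intro z. cbv beta. rewrite <- !Rmult_assoc, Rinv_l by lra. ring.
  - intro x. apply derivable_pt_lim_scal.
    apply (derivable_pt_lim_comp F (fun y => y ^ (S m)) x (f x) (INR (S m) * F x ^ m)).
    apply F_deriv. replace m with (pred (S m)) at 2 by auto. apply derivable_pt_lim_pow.
  - intro x. apply (continuity_pt_scal (fun z => INR (S m) * F z ^ m * f z)).
    apply (continuity_pt_mult (fun z => INR (S m) * F z ^ m) f); [|apply f_cont].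
    apply (continuity_pt_mult (fun z => INR (S m)) (fun z => F z ^ m)).
    apply continuity_pt_const; intros a b; auto. apply cont_pow, F_cont.
  - intros e He. destruct (F_low (e * INR (S m)) ltac:(apply Rmult_lt_0_compat; lra)) as [M HM].
    exists M. intros x Hx. specialize (HM x Hx). rewrite Rminus_0_r.
    pose proof (F01 x). pose proof (pow_01 (F x) m H).
    replace (F x ^ S m) with (F x * F x ^ m) by (simpl; ring).
    rewrite Rabs_right. 2:{ apply Rle_ge, Rmult_le_pos; [left; apply Rinv_0_lt_compat; lra|].
      apply Rmult_le_pos; lra. }
    apply (Rmult_le_reg_l (INR (S m))); auto. rewrite <- Rmult_assoc, Rinv_r by lra.
    nra.
  - intros e He. destruct (F_high e He) as [M HM].
    exists M. intros x Hx. specialize (HM x Hx).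
    pose proof (F01 x). pose proof (bernoulli_01 (F x) (S m) H). pose proof (pow_01 (F x) (S m) H).
    rewrite Rabs_left1.
    2:{ replace (/ INR (S m) * F x ^ S m - / INR (S m)) with (/ INR (S m) * (F x ^ S m - 1)) by ring.
        assert (0 < / INR (S m)) by (apply Rinv_0_lt_compat; lra). nra. }
    replace (- (/ INR (S m) * F x ^ S m - / INR (S m))) with (/ INR (S m) * (1 - F x ^ S m)) by ring.
    apply (Rmult_le_reg_l (INR (S m))); auto. rewrite <- Rmult_assoc, Rinv_r by lra. nra.
Qed.

Lemma IBP_lim j e : 0 < e -> exists M, forall x, M <= Rabs x -> Rabs (f x * f x * F x ^ j - 0) <= e.
Proof.
  intros He. destruct (hlim (Rmin e 1) ltac:(apply Rmin_glb_lt; lra)) as [M HM].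
  exists M. intros x Hx. specialize (HM x Hx). rewrite Rminus_0_r.
  pose proof (Rmin_l e 1); pose proof (Rmin_r e 1).
  pose proof (pow_01 (F x) j (F01 x)).
  rewrite !Rabs_mult. rewrite (Rabs_right (F x ^ j)) by lra.
  pose proof (Rabs_pos (f x)).
  assert (Rabs (f x) * Rabs (f x) <= Rmin e 1 * 1) by (apply Rmult_le_compat; lra).
  assert (Rabs (f x) * Rabs (f x) * F x ^ j <= Rabs (f x) * Rabs (f x) * 1) by (apply Rmult_le_compat_l; nra).
  lra.
Qed.

Lemma IBP_identity j : improper_int
  (fun z => 2 * (f' z * F z ^ j * f z) + INR j * (f z * f z * F z ^ (pred j) * f z)) 0.
Proof.
  eapply II_ext; [|replace 0 with (0 - 0) by ring;
    apply (II_deriv (fun z => f z * f z * F z ^ j)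
      (fun z => 2 * (f' z * F z ^ j * f z) + INR j * (f z * f z * F z ^ (pred j) * f z)))].
  - intro z. simpl. reflexivity.
  - intro x. replace (2 * (f' x * F x ^ j * f x) + INR j * (f x * f x * F x ^ pred j * f x))
      with ((f' x * f x + f x * f' x) * F x ^ j + f x * f x * (INR j * F x ^ pred j * f x)) by ring.
    apply (dpl_mult (fun z => f z * f z) (fun z => F z ^ j)).
    apply (dpl_mult f f); auto.
    apply (derivable_pt_lim_comp F (fun y => y ^ j) x (f x) (INR j * F x ^ pred j)).
    apply F_deriv. apply derivable_pt_lim_pow.
  - intro x.
    assert (Cf := f_cont). assert (CF := F_cont).
    apply continuity_pt_plus.
    + apply (continuity_pt_scal (fun z => f' z * F z ^ j * f z)).
      apply (continuity_pt_mult (fun z => f' z * F z ^ j) f); auto.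
      apply (continuity_pt_mult f' (fun z => F z ^ j)); [apply hf'c|apply cont_pow; auto].
    + apply (continuity_pt_scal (fun z => f z * f z * F z ^ pred j * f z)).
      apply (continuity_pt_mult (fun z => f z * f z * F z ^ pred j) f); auto.
      apply (continuity_pt_mult (fun z => f z * f z) (fun z => F z ^ pred j)); [|apply cont_pow; auto].
      apply (continuity_pt_mult f f); auto.
  - intros e He. destruct (IBP_lim j e He) as [M HM]. exists (Rabs M). intros x Hx. apply HM.
    pose proof (Rabs_pos M). pose proof (Rle_abs M). pose proof (Rle_abs (-x)). rewrite Rabs_Ropp in H1. lra.
  - intros e He. destruct (IBP_lim j e He) as [M HM]. exists (Rabs M). intros x Hx. apply HM.
    pose proof (Rabs_pos M). pose proof (Rle_abs M). pose proof (Rle_abs x). lra.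
Qed.

Lemma II_zero : improper_int (fun _ => 0) 0.
Proof.
  destruct hcdf as [_ [H _]]. eapply II_ext; [|replace 0 with (0 * 1) by ring; apply (II_scal f 1 0 H)].
  intro; simpl; ring.
Qed.

Lemma II_fsum n (g : nat -> R -> R) L : (forall i, (i < n)%nat -> improper_int (g i) (L i)) ->
  improper_int (fun z => fsum n (fun i => g i z)) (fsum n L).
Proof.
  induction n; intros H; simpl.
  - apply II_zero.
  - apply (II_plus (fun z => fsum n (fun i => g i z)) (g n)). apply IHn; auto. apply H; lia.
Qed.

Lemma II_bound r L c : improper_int r L -> (forall z, Rabs (r z) <= c * f z) -> Rabs L <= c.
Proof.
  intros Hr Hb. destruct hcdf as [_ [H1 _]].
  assert (A := II_scal f 1 c H1). assert (B := II_scal f 1 (-c) H1).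
  assert (Hl : forall z, - c * f z <= r z).
  { intro z. specialize (Hb z). apply Rabs_le_between in Hb. lra. }
  assert (Hu : forall z, r z <= c * f z).
  { intro z. specialize (Hb z). apply Rabs_le_between in Hb. lra. }
  pose proof (II_le _ _ _ _ Hl B Hr). pose proof (II_le _ _ _ _ Hu Hr A).
  apply Rabs_le. lra.
Qed.

Lemma dpl_from_bound (g : R -> R) l :
  (forall eps, 0 < eps -> exists d, 0 < d /\ forall t, Rabs t < d -> Rabs (g t - g 0 - t * l) <= Rabs t * eps) ->
  derivable_pt_lim g 0 l.
Proof.
  intros H eps He. destruct (H (eps/2) ltac:(lra)) as [d [Hd Hb]].
  exists (mkposreal d Hd). intros h Hh Hhd. simpl in Hhd. specialize (Hb h Hhd).
  rewrite Rplus_0_l.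
  replace ((g h - g 0) / h - l) with ((g h - g 0 - h * l) / h) by (field; auto).
  unfold Rdiv. rewrite Rabs_mult, Rabs_inv.
  assert (0 < Rabs h) by (apply Rabs_pos_lt; auto).
  apply (Rmult_le_compat_r (/ Rabs h)) in Hb; [|left; apply Rinv_0_lt_compat; auto].
  replace (Rabs h * (eps / 2) * / Rabs h) with (eps/2) in Hb by (field; lra). lra.
Qed.

Variable m : nat.
Variable Mf : R.
Hypothesis hMf : forall x, f x <= Mf.
Hypothesis hdui : dui_permitted F f f' m.

Definition Q x := pk F f m x.
Definition Q1 i x := Iint (d1_integrand F f m i x).
Definition Q2 i j x := Iint (d2_integrand F f f' m i j x).

Lemma Q_ex x : improper_int (pk_integrand F f m x) (Q x).
Proof. apply II_Iint_ex. apply (hdui x). Qed.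
Lemma Q1_ex i x : (i < m)%nat -> improper_int (d1_integrand F f m i x) (Q1 i x).
Proof. intro Hi. apply II_Iint_ex. apply (proj2 (hdui x) i Hi). Qed.
Lemma Q1_der i x : (i < m)%nat -> is_partial Q i x (Q1 i x).
Proof. intro Hi. apply (proj2 (hdui x) i Hi). Qed.
Lemma Q2_ex i j x : (i < m)%nat -> (j < m)%nat -> improper_int (d2_integrand F f f' m i j x) (Q2 i j x).
Proof. intros Hi Hj. apply II_Iint_ex. apply (proj2 (hdui x) i Hi). auto. Qed.
Lemma Q2_der i j x : (i < m)%nat -> (j < m)%nat -> is_partial (Q1 j) i x (Q2 i j x).
Proof. intros Hi Hj. apply (proj2 (hdui x) i Hi). auto. Qed.

Lemma Mf_pos : 0 <= Mf.
Proof. pose proof (hMf 0); pose proof (f_nonneg 0); lra. Qed.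

Lemma fprodx_01 n i a : (forall v, (v < n)%nat -> 0 <= a v <= 1) -> 0 <= fprodx n i a <= 1.
Proof. intro H. apply fprod_01. intros v Hv. destruct (Nat.eqb v i); [lra|auto]. Qed.

Lemma E1_pt x t z eps1 : (forall a, Rabs (F (a + t) - F a - t * f a) <= Rabs t * eps1) ->
  Rabs (pk_integrand F f m (fun v => x v + t) z - pk_integrand F f m x z
        - t * fsum m (fun i => d1_integrand F f m i x z))
  <= (INR m * (Rabs t * eps1) + (INR m * (Mf * Rabs t)) ^ 2) * f z.
Proof.
  intro Hinc.
  set (a := fun v => F (x v + z)). set (c := fun v => F (x v + t + z) - F (x v + z)).
  assert (E1 : pk_integrand F f m (fun v => x v + t) z = fprod m (fun v => a v + c v) * f z).
  { unfold pk_integrand. f_equal. apply fprod_ext. intros; unfold a, c; ring. }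
  assert (E2 : pk_integrand F f m x z = fprod m a * f z) by reflexivity.
  assert (E3 : t * fsum m (fun i => d1_integrand F f m i x z) =
               f z * fsum m (fun i => t * f (x i + z) * fprodx m i a)).
  { rewrite <- fsum_scal, <- fsum_scal. apply fsum_ext. intros. unfold d1_integrand, fprodx, a. ring. }
  rewrite E1, E2, E3.
  set (X := fprod m (fun v => a v + c v) - fprod m a - fsum m (fun i => c i * fprodx m i a)).
  set (Y := fsum m (fun i => (c i - t * f (x i + z)) * fprodx m i a)).
  assert (EY : Y = fsum m (fun i => c i * fprodx m i a) - fsum m (fun i => t * f (x i + z) * fprodx m i a)).
  { unfold Y. replace (fsum m (fun i => c i * fprodx m i a) - fsum m (fun i => t * f (x i + z) * fprodx m i a))
      with (fsum m (fun i => c i * fprodx m i a) + (-1) * fsum m (fun i => t * f (x i + z) * fprodx m i a)) by ring.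
    rewrite <- fsum_scal, <- fsum_plus. apply fsum_ext; intros; ring. }
  replace (fprod m (fun v => a v + c v) * f z - fprod m a * f z - f z * fsum m (fun i => t * f (x i + z) * fprodx m i a))
    with (f z * (X + Y)) by (rewrite EY; unfold X; ring).
  rewrite Rabs_mult, (Rabs_right (f z)) by (apply Rle_ge, f_nonneg).
  rewrite (Rmult_comm (f z) (Rabs (X + Y))). apply Rmult_le_compat_r; [apply f_nonneg|].
  assert (Ha : forall v, (v < m)%nat -> 0 <= a v <= 1) by (intros; apply F01).
  assert (HX : Rabs X <= (INR m * (Mf * Rabs t)) ^ 2).
  { eapply Rle_trans; [apply fprod_expand; auto|].
    - intros; unfold a, c. replace (F (x i + z) + (F (x i + t + z) - F (x i + z))) with (F (x i + t + z)) by ring. apply F01.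
    - assert (0 <= fsum m (fun i => Rabs (c i))) by (apply fsum_nonneg; intros; apply Rabs_pos).
      assert (fsum m (fun i => Rabs (c i)) <= INR m * (Mf * Rabs t)).
      { rewrite <- fsum_const. apply fsum_le. intros i Hi. unfold c.
        replace (x i + t + z) with ((x i + z) + t) by ring.
        eapply Rle_trans; [apply (F_lip Mf hMf)|]. right. f_equal. f_equal. ring. }
      apply pow_incr. lra. }
  assert (HY : Rabs Y <= INR m * (Rabs t * eps1)).
  { unfold Y. eapply Rle_trans; [apply fsum_abs|]. rewrite <- fsum_const. apply fsum_le. intros i Hi.
    rewrite Rabs_mult. pose proof (fprodx_01 m i a Ha).
    rewrite (Rabs_right (fprodx m i a)) by lra.
    assert (Rabs (c i - t * f (x i + z)) <= Rabs t * eps1).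
    { unfold c. replace (x i + t + z) with ((x i + z) + t) by ring. apply Hinc. }
    pose proof (Rabs_pos (c i - t * f (x i + z))). nra. }
  eapply Rle_trans; [apply Rabs_triang|]. lra.
Qed.

Lemma Q_ext x y : (forall v, (v < m)%nat -> x v = y v) -> Q x = Q y.
Proof.
  intro H. unfold Q, pk. apply Iint_ext. intro z. unfold pk_integrand. f_equal.
  apply fprod_ext. intros. rewrite H; auto.
Qed.
Lemma Q1_ext i x y : (i < m)%nat -> (forall v, (v < m)%nat -> x v = y v) -> Q1 i x = Q1 i y.
Proof.
  intros Hi H. unfold Q1. apply Iint_ext. intro z. unfold d1_integrand. rewrite H by auto. f_equal. f_equal.
  apply fprod_ext. intros. rewrite H; auto.
Qed.
Lemma Q2_ext i j x y : (i < m)%nat -> (j < m)%nat -> (forall v, (v < m)%nat -> x v = y v) -> Q2 i j x = Q2 i j y.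
Proof.
  intros Hi Hj H. unfold Q2. apply Iint_ext. intro z. unfold d2_integrand. rewrite !H by auto.
  destruct (Nat.eqb i j); f_equal; f_equal; apply fprod_ext; intros; rewrite H; auto.
Qed.

Lemma E1 x : derivable_pt_lim (fun t => Q (fun v => x v + t)) 0 (fsum m (fun i => Q1 i x)).
Proof.
  apply dpl_from_bound. intros eps He.
  assert (Hm : 0 <= INR m) by apply pos_INR.
  set (e1 := eps / (2 * (INR m + 1))).
  assert (He1 : 0 < e1) by (unfold e1; apply Rdiv_lt_0_compat; lra).
  destruct (F_incr e1 He1) as [d [Hd Hinc]].
  set (K := (INR m * Mf) ^ 2).
  assert (HK : 0 <= K) by (unfold K; apply pow2_ge_0).
  exists (Rmin d (eps / (2 * (K + 1)))). split.
  { apply Rmin_glb_lt; auto. apply Rdiv_lt_0_compat; lra. }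
  intros t Ht. pose proof (Rmin_l d (eps / (2 * (K + 1)))). pose proof (Rmin_r d (eps / (2 * (K + 1)))).
  rewrite (Q_ext (fun v => x v + 0) x) by (intros; ring).
  assert (HI : improper_int (fun z => pk_integrand F f m (fun v => x v + t) z - pk_integrand F f m x z
        - t * fsum m (fun i => d1_integrand F f m i x z))
      (Q (fun v => x v + t) - Q x - t * fsum m (fun i => Q1 i x))).
  { apply II_minus. apply II_minus; apply Q_ex.
    apply II_scal. apply (II_fsum m (fun i z => d1_integrand F f m i x z)). intros; apply Q1_ex; auto. }
  assert (HB := II_bound _ _ _ HI (fun z => E1_pt x t z e1 (fun a => Hinc a t ltac:(lra)))).
  eapply Rle_trans; [exact HB|].
  assert (INR m * e1 <= eps / 2).
  { unfold e1. apply (Rmult_le_reg_r (2 * (INR m + 1))); [lra|].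
    replace (INR m * (eps / (2 * (INR m + 1))) * (2 * (INR m + 1))) with (INR m * eps) by (field; lra). nra. }
  assert (K * Rabs t <= eps / 2).
  { assert (Ht2 : Rabs t <= eps / (2 * (K + 1))) by lra.
    apply (Rmult_le_compat_l K) in Ht2; auto.
    assert (K * (eps / (2 * (K + 1))) <= eps / 2).
    { apply (Rmult_le_reg_r (2 * (K + 1))); [lra|].
      replace (K * (eps / (2 * (K + 1))) * (2 * (K + 1))) with (K * eps) by (field; lra).
      replace (eps / 2 * (2 * (K + 1))) with (K * eps + eps) by (field; lra). lra. }
    lra. }
  replace ((INR m * (Mf * Rabs t)) ^ 2) with (K * Rabs t * Rabs t) by (unfold K; ring).
  pose proof (Rabs_pos t). nra.
Qed.

Definition x0 : nat -> R := fun _ => 0.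

Lemma E2_pt u t z eps1 : (u < m)%nat ->
  (forall a, Rabs (F (a + t) - F a - t * f a) <= Rabs t * eps1) ->
  Rabs (f (t + z) - f z) <= eps1 ->
  Rabs (d1_integrand F f m u (fun _ => t) z - d1_integrand F f m u (upd x0 u t) z
        - t * fsum m (fun i => if Nat.eqb i u then 0 else d2_integrand F f f' m i u x0 z))
  <= (Mf * (INR m * (Mf * Rabs t)) ^ 2 + Mf * (INR m * (Rabs t * eps1)) + eps1 * (INR m * (Mf * Rabs t))) * f z.
Proof.
  intros Hu Hinc Hfu.
  set (a := fun v => if Nat.eqb v u then 1 else F z).
  set (c := fun v => if Nat.eqb v u then 0 else F (t + z) - F z).
  assert (Ha : forall v, (v < m)%nat -> 0 <= a v <= 1) by (intros; unfold a; destruct (Nat.eqb v u); [lra|apply F01]).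
  assert (Hac : forall v, (v < m)%nat -> 0 <= a v + c v <= 1).
  { intros; unfold a, c; destruct (Nat.eqb v u); [lra|]. replace (F z + (F (t + z) - F z)) with (F (t+z)) by ring. apply F01. }
  assert (E1 : d1_integrand F f m u (fun _ => t) z = f (t + z) * fprod m (fun v => a v + c v) * f z).
  { unfold d1_integrand. f_equal. f_equal. apply fprod_ext. intros v Hv. unfold a, c. destruct (Nat.eqb v u); ring. }
  assert (E2 : d1_integrand F f m u (upd x0 u t) z = f (t + z) * fprod m a * f z).
  { unfold d1_integrand, upd, x0. rewrite Nat.eqb_refl. replace (0 + t + z) with (t + z) by ring. f_equal. f_equal.
    apply fprod_ext. intros v Hv. unfold a. destruct (Nat.eqb v u); [auto|]. f_equal; ring. }
  assert (E3 : t * fsum m (fun i => if Nat.eqb i u then 0 else d2_integrand F f f' m i u x0 z)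
     = f z * fsum m (fun i => (if Nat.eqb i u then 0 else t * f z) * fprodx m i a) * f z).
  { rewrite <- fsum_scal. rewrite Rmult_comm, <- fsum_scal, <- fsum_scal. apply fsum_ext. intros i Hi.
    destruct (Nat.eqb_spec i u) as [->|Hne]; [ring|].
    unfold d2_integrand, x0. destruct (Nat.eqb_spec i u); [lia|]. rewrite Rplus_0_l.
    unfold fprodx. rewrite (fprod_ext m (fun v => if (Nat.eqb v i || Nat.eqb v u)%bool then 1 else F z)
       (fun v => if Nat.eqb v i then 1 else a v)). ring.
    intros v Hv. unfold a. destruct (Nat.eqb v i); destruct (Nat.eqb v u); simpl; auto; f_equal; ring. }
  rewrite E1, E2, E3.
  set (P1 := fprod m (fun v => a v + c v)). set (P0 := fprod m a).
  set (Sc := fsum m (fun i => c i * fprodx m i a)).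
  set (St := fsum m (fun i => (if Nat.eqb i u then 0 else t * f z) * fprodx m i a)).
  replace (f (t + z) * P1 * f z - f (t + z) * P0 * f z - f z * St * f z)
    with ((f z * (P1 - P0 - Sc) + f z * (Sc - St) + (f (t + z) - f z) * (P1 - P0)) * f z) by ring.
  rewrite Rabs_mult, (Rabs_right (f z)) by (apply Rle_ge, f_nonneg).
  apply Rmult_le_compat_r; [apply f_nonneg|].
  assert (Hfz : 0 <= f z <= Mf) by (split; [apply f_nonneg|apply hMf]).
  assert (Hc : fsum m (fun i => Rabs (c i)) <= INR m * (Mf * Rabs t)).
  { rewrite <- fsum_const. apply fsum_le. intros i Hi. unfold c. destruct (Nat.eqb i u).
    - rewrite Rabs_R0. pose proof Mf_pos; pose proof (Rabs_pos t); nra.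
    - replace (t + z) with (z + t) by ring. eapply Rle_trans; [apply (F_lip Mf hMf)|]. right. f_equal. f_equal. ring. }
  assert (Hc0 : 0 <= fsum m (fun i => Rabs (c i))) by (apply fsum_nonneg; intros; apply Rabs_pos).
  assert (HX : Rabs (P1 - P0 - Sc) <= (INR m * (Mf * Rabs t)) ^ 2).
  { eapply Rle_trans; [apply fprod_expand; auto|]. apply pow_incr; lra. }
  assert (HP : Rabs (P1 - P0) <= INR m * (Mf * Rabs t)).
  { eapply Rle_trans; [|exact Hc]. unfold P1, P0.
    rewrite (fsum_ext m _ (fun i => Rabs ((a i + c i) - a i))) by (intros; f_equal; ring).
    apply fprod_diff; auto. }
  assert (HY : Rabs (Sc - St) <= INR m * (Rabs t * eps1)).
  { unfold Sc, St. replace (fsum m (fun i => c i * fprodx m i a) -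
      fsum m (fun i => (if Nat.eqb i u then 0 else t * f z) * fprodx m i a))
      with (fsum m (fun i => (c i - (if Nat.eqb i u then 0 else t * f z)) * fprodx m i a)).
    2:{ replace (fsum m (fun i => c i * fprodx m i a) -
         fsum m (fun i => (if Nat.eqb i u then 0 else t * f z) * fprodx m i a)) with
         (fsum m (fun i => c i * fprodx m i a) +
         (-1) * fsum m (fun i => (if Nat.eqb i u then 0 else t * f z) * fprodx m i a)) by ring.
        rewrite <- fsum_scal, <- fsum_plus. apply fsum_ext; intros; ring. }
    eapply Rle_trans; [apply fsum_abs|]. rewrite <- fsum_const. apply fsum_le. intros i Hi.
    rewrite Rabs_mult. pose proof (fprodx_01 m i a Ha).
    rewrite (Rabs_right (fprodx m i a)) by lra.
    assert (Rabs (c i - (if Nat.eqb i u then 0 else t * f z)) <= Rabs t * eps1).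
    { unfold c. destruct (Nat.eqb i u).
      - replace (0 - 0) with 0 by ring. rewrite Rabs_R0. pose proof (Rabs_pos t).
        assert (0 <= eps1). { pose proof (Rabs_pos (f (t + z) - f z)); lra. } nra.
      - replace (t + z) with (z + t) by ring. apply Hinc. }
    pose proof (Rabs_pos (c i - (if Nat.eqb i u then 0 else t * f z))). nra. }
  eapply Rle_trans; [apply Rabs_triang|]. eapply Rle_trans; [apply Rplus_le_compat_r, Rabs_triang|].
  rewrite !Rabs_mult. rewrite (Rabs_right (f z)) by lra.
  assert (f z * Rabs (P1 - P0 - Sc) <= Mf * (INR m * (Mf * Rabs t)) ^ 2) by (apply Rmult_le_compat; try lra; apply Rabs_pos).
  assert (f z * Rabs (Sc - St) <= Mf * (INR m * (Rabs t * eps1))) by (apply Rmult_le_compat; try lra; apply Rabs_pos).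
  assert (Rabs (f (t + z) - f z) * Rabs (P1 - P0) <= eps1 * (INR m * (Mf * Rabs t))) by (apply Rmult_le_compat; try lra; apply Rabs_pos).
  lra.
Qed.

Lemma fsum_split n g u : (u < n)%nat -> fsum n g = g u + fsum n (fun i => if Nat.eqb i u then 0 else g i).
Proof.
  intro Hu. rewrite <- (fsum_single n u g Hu). rewrite <- fsum_plus. apply fsum_ext.
  intros i Hi. destruct (Nat.eqb i u); ring.
Qed.

Lemma dpl_to_bound g l : derivable_pt_lim g 0 l ->
  forall eps, 0 < eps -> exists d, 0 < d /\ forall t, Rabs t < d -> Rabs (g t - g 0 - t * l) <= Rabs t * eps.
Proof.
  intros H eps He. destruct (H eps He) as [d Hd]. exists d. split; [apply cond_pos|].
  intros t Ht. destruct (Req_dec t 0) as [->|Hne].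
  - replace (g 0 - g 0 - 0 * l) with 0 by ring. rewrite Rabs_R0. pose proof (Rabs_pos 0); nra.
  - specialize (Hd t Hne Ht). rewrite Rplus_0_l in Hd.
    replace (g t - g 0 - t * l) with (t * ((g t - g 0) / t - l)) by (field; auto).
    rewrite Rabs_mult. apply Rmult_le_compat_l; [apply Rabs_pos|lra].
Qed.

Lemma E2 u : (u < m)%nat ->
  derivable_pt_lim (fun t => Q1 u (fun _ => t)) 0 (fsum m (fun i => Q2 i u x0)).
Proof.
  intro Hu. apply dpl_from_bound. intros eps He.
  assert (Hm : 0 <= INR m) by apply pos_INR. pose proof Mf_pos as HMf.
  destruct (dpl_to_bound _ _ (Q2_der u u x0 Hu Hu) (eps/2) ltac:(lra)) as [dA [HdA HA]].
  set (e1 := eps / (8 * (Mf * INR m + 1))).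
  assert (He1 : 0 < e1) by (unfold e1; apply Rdiv_lt_0_compat; nra).
  destruct (F_incr e1 He1) as [dF [HdF Hinc]].
  destruct (f_unif e1 He1) as [dU [HdU Hunif]].
  set (K := Mf * (INR m * Mf) ^ 2).
  assert (HK : 0 <= K) by (unfold K; apply Rmult_le_pos; [lra|apply pow2_ge_0]).
  set (d := Rmin (Rmin dA dF) (Rmin dU (eps / (4 * (K + 1))))).
  assert (Hd4 : 0 < eps / (4 * (K + 1))) by (apply Rdiv_lt_0_compat; lra).
  exists d. split. { unfold d; repeat apply Rmin_glb_lt; auto. }
  intros t Ht.
  assert (Ht1 : Rabs t < dA) by (unfold d in Ht; pose proof (Rmin_l (Rmin dA dF) (Rmin dU (eps / (4 * (K + 1)))));
    pose proof (Rmin_l dA dF); lra).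
  assert (Ht2 : Rabs t < dF) by (unfold d in Ht; pose proof (Rmin_l (Rmin dA dF) (Rmin dU (eps / (4 * (K + 1)))));
    pose proof (Rmin_r dA dF); lra).
  assert (Ht3 : Rabs t < dU) by (unfold d in Ht; pose proof (Rmin_r (Rmin dA dF) (Rmin dU (eps / (4 * (K + 1)))));
    pose proof (Rmin_l dU (eps / (4 * (K + 1)))); lra).
  assert (Ht4 : Rabs t <= eps / (4 * (K + 1))) by (unfold d in Ht; pose proof (Rmin_r (Rmin dA dF) (Rmin dU (eps / (4 * (K + 1)))));
    pose proof (Rmin_r dU (eps / (4 * (K + 1)))); lra).
  specialize (HA t Ht1).
  assert (E0 : Q1 u (upd x0 u 0) = Q1 u (fun _ => 0)).
  { apply Q1_ext; auto. intros v Hv. unfold upd, x0. destruct (Nat.eqb v u); ring. }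
  rewrite E0 in HA.
  assert (HI : improper_int (fun z => d1_integrand F f m u (fun _ => t) z - d1_integrand F f m u (upd x0 u t) z
        - t * fsum m (fun i => if Nat.eqb i u then 0 else d2_integrand F f f' m i u x0 z))
      (Q1 u (fun _ => t) - Q1 u (upd x0 u t) - t * fsum m (fun i => if Nat.eqb i u then 0 else Q2 i u x0))).
  { apply II_minus. apply II_minus; apply Q1_ex; auto.
    apply II_scal. apply (II_fsum m (fun i z => if Nat.eqb i u then 0 else d2_integrand F f f' m i u x0 z)).
    intros i Hi. destruct (Nat.eqb i u). apply II_zero. apply Q2_ex; auto. }
  assert (Hfu : forall z, Rabs (f (t + z) - f z) <= e1).
  { intro z. apply Hunif. replace (t + z - z) with t by ring. auto. }
  assert (HB := II_bound _ _ _ HI (fun z => E2_pt u t z e1 Hu (fun a => Hinc a t Ht2) (Hfu z))).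
  rewrite (fsum_split m _ u Hu).
  set (S' := fsum m (fun i => if Nat.eqb i u then 0 else Q2 i u x0)) in *.
  replace (Q1 u (fun _ => t) - Q1 u (fun _ => 0) - t * (Q2 u u x0 + S'))
    with ((Q1 u (upd x0 u t) - Q1 u (fun _ => 0) - t * Q2 u u x0) +
          (Q1 u (fun _ => t) - Q1 u (upd x0 u t) - t * S')) by ring.
  eapply Rle_trans; [apply Rabs_triang|].
  assert (Rabs (Q1 u (fun _ => t) - Q1 u (upd x0 u t) - t * S') <= Rabs t * (eps / 2)).
  { eapply Rle_trans; [exact HB|].
    replace (Mf * (INR m * (Mf * Rabs t)) ^ 2 + Mf * (INR m * (Rabs t * e1)) + e1 * (INR m * (Mf * Rabs t)))
      with (Rabs t * (K * Rabs t + 2 * (Mf * INR m) * e1)) by (unfold K; ring).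
    apply Rmult_le_compat_l; [apply Rabs_pos|].
    assert (K * Rabs t <= eps / 4).
    { apply (Rmult_le_compat_l K) in Ht4; auto. eapply Rle_trans; [exact Ht4|].
      apply (Rmult_le_reg_r (4 * (K + 1))); [lra|].
      replace (K * (eps / (4 * (K + 1))) * (4 * (K + 1))) with (K * eps) by (field; lra).
      replace (eps / 4 * (4 * (K + 1))) with (K * eps + eps) by (field; lra). lra. }
    assert (2 * (Mf * INR m) * e1 <= eps / 4).
    { unfold e1. apply (Rmult_le_reg_r (8 * (Mf * INR m + 1))); [nra|].
      replace (2 * (Mf * INR m) * (eps / (8 * (Mf * INR m + 1))) * (8 * (Mf * INR m + 1))) with (2 * (Mf * INR m) * eps) by (field; nra).
      nra. }
    lra. }
  lra.
Qed.

Definition Gv := Iint (fun z => f z ^ 2 * F z ^ (pred m)).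
Definition av := Iint (fun z => f' z * F z ^ (pred m) * f z).
Definition bv := Iint (fun z => f z * f z * F z ^ (pred (pred m)) * f z).

Lemma Q_x0 : Q x0 = / INR (S m).
Proof.
  unfold Q, pk. rewrite <- (II_Iint _ _ (P_value m)). apply Iint_ext. intro z.
  unfold pk_integrand, x0. rewrite (fprod_ext m _ (fun _ => F z)) by (intros; f_equal; ring).
  rewrite fprod_const. auto.
Qed.

Lemma Q1_x0 i : (i < m)%nat -> Q1 i x0 = Gv.
Proof.
  intro Hi. unfold Q1, Gv. apply Iint_ext. intro z. unfold d1_integrand, x0.
  rewrite Rplus_0_l. rewrite fprod_out1 by auto. ring.
Qed.

Lemma Q2_x0_diag i : (i < m)%nat -> Q2 i i x0 = av.
Proof.
  intro Hi. unfold Q2, av. apply Iint_ext. intro z. unfold d2_integrand, x0.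
  rewrite Nat.eqb_refl. rewrite Rplus_0_l. rewrite fprod_out1 by auto. ring.
Qed.

Lemma Q2_x0_off i j : (i < m)%nat -> (j < m)%nat -> i <> j -> Q2 i j x0 = bv.
Proof.
  intros Hi Hj Hij. unfold Q2, bv. apply Iint_ext. intro z. unfold d2_integrand, x0.
  destruct (Nat.eqb_spec i j); [lia|]. rewrite Rplus_0_l.
  rewrite fprod_out2 by auto. ring.
Qed.

Lemma IBP_ab : (1 <= m)%nat -> 2 * av + INR (pred m) * bv = 0.
Proof.
  intro Hm. assert (HI := IBP_identity (pred m)).
  assert (Ha : improper_int (fun z => f' z * F z ^ (pred m) * f z) av).
  { assert (H := Q2_ex 0 0 x0 ltac:(lia) ltac:(lia)). rewrite Q2_x0_diag in H by lia.
    eapply II_ext; [|exact H]. intro z. unfold d2_integrand, x0. simpl Nat.eqb. rewrite Rplus_0_l.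
    rewrite fprod_out1 by lia. ring. }
  destruct (Nat.eq_dec m 1) as [->|Hm2].
  - simpl pred in *. simpl INR in *. rewrite Rmult_0_l, Rplus_0_r.
    apply (II_unique (fun z => 2 * (f' z * F z ^ 0 * f z) + 0 * (f z * f z * F z ^ 0 * f z))); auto.
    eapply II_ext; [|apply (II_scal _ _ 2 Ha)]. intro; simpl; ring.
  - assert (Hb : improper_int (fun z => f z * f z * F z ^ (pred (pred m)) * f z) bv).
    { assert (H := Q2_ex 0 1 x0 ltac:(lia) ltac:(lia)). rewrite Q2_x0_off in H by lia.
      eapply II_ext; [|exact H]. intro z. unfold d2_integrand, x0. simpl Nat.eqb. rewrite Rplus_0_l.
      rewrite fprod_out2 by lia. ring. }
    apply (II_unique _ _ _ (II_lin _ _ _ _ (INR (pred m)) (II_scal _ _ 2 Ha) Hb)).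
    eapply II_ext; [|exact HI]. intro; simpl; ring.
Qed.

Variable SS : list nat.
Variables y n : nat.
Hypothesis hSnd : NoDup SS.
Hypothesis hyS : In y SS.
Hypothesis hSN : forall u, In u SS -> (u < n)%nat.
Hypothesis hmL : length (remove Nat.eq_dec y SS) = m.
Hypothesis hm1 : (1 <= m)%nat.

Definition LL := remove Nat.eq_dec y SS.
Definition Lp (p : nat) := nth p LL 0%nat.
Definition X (th : nat -> R) : nat -> R := fun v => th y - th (Lp v).

Lemma LL_nd : NoDup LL.
Proof. apply NoDup_remove_nat; auto. Qed.
Lemma Lp_in p : (p < m)%nat -> In (Lp p) SS /\ Lp p <> y.
Proof. intro Hp. apply (in_remove Nat.eq_dec SS). apply nth_In. unfold LL; lia. Qed.
Lemma Lp_inj p q : (p < m)%nat -> (q < m)%nat -> Lp p = Lp q -> p = q.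
Proof. intros Hp Hq E. apply (proj1 (NoDup_nth LL 0%nat) LL_nd); auto; unfold LL; lia. Qed.
Lemma Lp_surj j : In j SS -> j <> y -> exists p, (p < m)%nat /\ Lp p = j.
Proof.
  intros Hj Hne. destruct (In_nth LL j 0%nat) as [p [Hp E]].
  apply in_in_remove; auto. exists p; split; auto. unfold LL in Hp; lia.
Qed.
Lemma Lp_lt p : (p < m)%nat -> (Lp p < n)%nat.
Proof. intro; apply hSN; apply Lp_in; auto. Qed.
Lemma y_lt : (y < n)%nat.
Proof. apply hSN; auto. Qed.

Lemma X_out th j t : ~ In j SS -> forall v, (v < m)%nat -> X (upd th j t) v = X th v.
Proof.
  intros Hj v Hv. unfold X, upd. destruct (Lp_in v Hv) as [Hin Hne].
  destruct (Nat.eqb_spec y j) as [->|]; [tauto|].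
  destruct (Nat.eqb_spec (Lp v) j) as [E|]; [rewrite <- E in Hj; tauto|auto].
Qed.

Lemma X_L th p t : (p < m)%nat -> forall v, (v < m)%nat -> X (upd th (Lp p) t) v = upd (X th) p (- t) v.
Proof.
  intros Hp v Hv. unfold X, upd. destruct (Lp_in p Hp) as [Hin Hne].
  destruct (Nat.eqb_spec y (Lp p)) as [E|]; [congruence|].
  destruct (Nat.eqb_spec (Lp v) (Lp p)) as [E|Hn].
  - apply Lp_inj in E; auto. subst. rewrite Nat.eqb_refl. ring.
  - destruct (Nat.eqb_spec v p); [subst; tauto|auto].
Qed.

Lemma X_y th t : forall v, (v < m)%nat -> X (upd th y t) v = X th v + t.
Proof.
  intros v Hv. unfold X, upd. destruct (Lp_in v Hv) as [Hin Hne]. rewrite Nat.eqb_refl.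
  destruct (Nat.eqb_spec (Lp v) y); [tauto|]. ring.
Qed.

Lemma X_0 : forall v, X (fun _ => 0) v = x0 v.
Proof. intro; unfold X, x0; ring. Qed.

Lemma pyS_eq th : pyS F f SS y th = Q (X th).
Proof. unfold pyS, Q, X, Lp, LL. rewrite hmL. reflexivity. Qed.

Definition phi (th : nat -> R) := - ln (pyS F f SS y th).

Lemma part_out th j : ~ In j SS -> is_partial phi j th 0.
Proof.
  intro Hj. unfold is_partial. apply dpl_const_loc. exists 1; split; [lra|]. intros t _.
  unfold phi. rewrite !pyS_eq. f_equal. f_equal. apply Q_ext. intros v Hv.
  rewrite !X_out; auto.
Qed.

Lemma part_L th p : (p < m)%nat -> 0 < Q (X th) -> is_partial phi (Lp p) th (Q1 p (X th) / Q (X th)).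
Proof.
  intros Hp HQ. unfold is_partial.
  apply (dpl_ext (fun t => - ln (Q (upd (X th) p (- t))))).
  { intro t. unfold phi. rewrite pyS_eq. f_equal. f_equal. apply Q_ext. intros v Hv. rewrite X_L; auto. }
  assert (E0 : Q (upd (X th) p (- 0)) = Q (X th)).
  { apply Q_ext. intros v Hv. unfold upd. destruct (Nat.eqb v p); ring. }
  replace (Q1 p (X th) / Q (X th)) with (- (- Q1 p (X th) / Q (upd (X th) p (- 0)))) by (rewrite E0; field; lra).
  apply (dpl_negln (fun t => Q (upd (X th) p (- t)))).
  - apply (dpl_neg (fun s => Q (upd (X th) p s))). apply Q1_der; auto.
  - rewrite E0; auto.
Qed.

Lemma part_y th : 0 < Q (X th) -> is_partial phi y th (- fsum m (fun i => Q1 i (X th)) / Q (X th)).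
Proof.
  intros HQ. unfold is_partial.
  apply (dpl_ext (fun t => - ln (Q (fun v => X th v + t)))).
  { intro t. unfold phi. rewrite pyS_eq. f_equal. f_equal. apply Q_ext. intros v Hv. rewrite X_y; auto. }
  assert (E0 : Q (fun v => X th v + 0) = Q (X th)) by (apply Q_ext; intros; ring).
  replace (- fsum m (fun i => Q1 i (X th)) / Q (X th)) with
     (- (fsum m (fun i => Q1 i (X th)) / Q (fun v => X th v + 0))) by (rewrite E0; field; lra).
  apply (dpl_negln (fun t => Q (fun v => X th v + t))).
  - apply E1.
  - rewrite E0; auto.
Qed.

Lemma Q_lip x x' eta : (forall v, (v < m)%nat -> Rabs (x v - x' v) <= eta) ->
  Rabs (Q x - Q x') <= INR m * Mf * eta.
Proof.
  intro H. apply (II_bound _ _ _ (II_minus _ _ _ _ (Q_ex x) (Q_ex x'))).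
  intro z. unfold pk_integrand.
  replace (fprod m (fun v => F (x v + z)) * f z - fprod m (fun v => F (x' v + z)) * f z)
    with ((fprod m (fun v => F (x v + z)) - fprod m (fun v => F (x' v + z))) * f z) by ring.
  rewrite Rabs_mult, (Rabs_right (f z)) by (apply Rle_ge, f_nonneg).
  apply Rmult_le_compat_r; [apply f_nonneg|].
  eapply Rle_trans; [apply fprod_diff; intros; apply F01|].
  replace (INR m * Mf * eta) with (INR m * (Mf * eta)) by ring. rewrite <- fsum_const. apply fsum_le. intros v Hv.
  eapply Rle_trans; [apply (F_lip Mf hMf)|].
  replace (x v + z - (x' v + z)) with (x v - x' v) by ring.
  pose proof Mf_pos. apply Rmult_le_compat_l; auto.
Qed.

Definition delta0 := / (4 * (INR m * Mf + 1) * INR (S m)).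

Lemma delta0_pos : 0 < delta0.
Proof.
  unfold delta0. pose proof Mf_pos. pose proof (pos_INR m).
  assert (0 < INR (S m)) by (apply lt_0_INR; lia).
  apply Rinv_0_lt_compat. apply Rmult_lt_0_compat; [|auto]. nra.
Qed.

Lemma Q_pos th : (forall l, Rabs (th l) < delta0) -> 0 < Q (X th).
Proof.
  intro H. assert (Hk : 0 < INR (S m)) by (apply lt_0_INR; lia).
  pose proof Mf_pos. pose proof (pos_INR m).
  assert (HL := Q_lip (X th) x0 (2 * delta0)).
  rewrite Q_x0 in HL.
  assert (Hb : forall v, (v < m)%nat -> Rabs (X th v - x0 v) <= 2 * delta0).
  { intros v Hv. unfold X, x0. rewrite Rminus_0_r.
    eapply Rle_trans; [apply Rabs_triang|]. rewrite Rabs_Ropp. pose proof (H y). pose proof (H (Lp v)). lra. }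
  specialize (HL Hb). apply Rabs_le_between in HL.
  assert (INR m * Mf * (2 * delta0) <= 1 * (/ 2 * / INR (S m))).
  { unfold delta0. rewrite Rinv_mult. rewrite Rinv_mult.
    assert (0 < INR m * Mf + 1) by nra.
    replace (INR m * Mf * (2 * (/ 4 * / (INR m * Mf + 1) * / INR (S m)))) with
      ((INR m * Mf / (INR m * Mf + 1)) * (/ 2 * / INR (S m))) by (field; lra).
    apply Rmult_le_compat_r. apply Rmult_le_pos; left; apply Rinv_0_lt_compat; lra.
    apply (Rmult_le_reg_r (INR m * Mf + 1)); auto. unfold Rdiv. rewrite Rmult_assoc, Rinv_l by lra. lra. }
  assert (1 * (/ 2 * / INR (S m)) < / INR (S m)).
  { assert (0 < / INR (S m)) by (apply Rinv_0_lt_compat; lra). lra. }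
  lra.
Qed.

Definition Pv := / INR (S m).
Definition Av := av + INR (pred m) * bv.
Definition th0 : nat -> R := fun _ => 0.

Lemma INR_pred_m : INR (pred m) = INR m - 1.
Proof. destruct m; [lia|]. simpl pred. rewrite S_INR. ring. Qed.

Lemma sum_off p c : (p < m)%nat -> fsum m (fun q => if Nat.eqb q p then 0 else c) = INR (pred m) * c.
Proof.
  intro Hp. assert (H := fsum_split m (fun _ => c) p Hp). rewrite fsum_const in H.
  rewrite INR_pred_m. lra.
Qed.

Lemma sumQ2_row p : (p < m)%nat -> fsum m (fun q => Q2 p q x0) = Av.
Proof.
  intro Hp. rewrite (fsum_split m _ p Hp). rewrite Q2_x0_diag by auto.
  rewrite (fsum_ext m _ (fun q => if Nat.eqb q p then 0 else bv)).
  rewrite sum_off by auto. unfold Av; ring.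
  intros q Hq. destruct (Nat.eqb_spec q p); auto. apply Q2_x0_off; auto.
Qed.

Lemma sumQ2_col q : (q < m)%nat -> fsum m (fun i => Q2 i q x0) = Av.
Proof.
  intro Hq. rewrite (fsum_split m _ q Hq). rewrite Q2_x0_diag by auto.
  rewrite (fsum_ext m _ (fun i => if Nat.eqb i q then 0 else bv)).
  rewrite sum_off by auto. unfold Av; ring.
  intros i Hi. destruct (Nat.eqb_spec i q); auto. apply Q2_x0_off; auto.
Qed.

Lemma sumQ1 : fsum m (fun i => Q1 i x0) = INR m * Gv.
Proof. rewrite <- fsum_const. apply fsum_ext. intros; apply Q1_x0; auto. Qed.

Lemma Xu_out i t : ~ In i SS -> forall v, (v < m)%nat -> X (upd th0 i t) v = x0 v.
Proof. intros Hi v Hv. rewrite X_out; auto. unfold X, th0, x0; ring. Qed.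
Lemma Xu_L p t : (p < m)%nat -> forall v, (v < m)%nat -> X (upd th0 (Lp p) t) v = upd x0 p (- t) v.
Proof. intros Hp v Hv. rewrite X_L; auto. unfold upd, X, th0, x0. destruct (Nat.eqb v p); ring. Qed.
Lemma Xu_y t : forall v, (v < m)%nat -> X (upd th0 y t) v = t.
Proof. intros v Hv. rewrite X_y; auto. unfold X, th0; ring. Qed.

Lemma Q_upd0 p : Q (upd x0 p (- 0)) = Pv.
Proof. unfold Pv. rewrite <- Q_x0. apply Q_ext. intros; unfold upd, x0. destruct (Nat.eqb v p); ring. Qed.
Lemma Q1_upd0 q p : (q < m)%nat -> Q1 q (upd x0 p (- 0)) = Gv.
Proof. intro Hq. rewrite <- (Q1_x0 q Hq). apply Q1_ext; auto. intros; unfold upd, x0. destruct (Nat.eqb v p); ring. Qed.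
Lemma Q_const0 : Q (fun _ => 0) = Pv.
Proof. unfold Pv. rewrite <- Q_x0. apply Q_ext. intros; auto. Qed.
Lemma Q1_const0 q : (q < m)%nat -> Q1 q (fun _ => 0) = Gv.
Proof. intro Hq. rewrite <- (Q1_x0 q Hq). apply Q1_ext; auto. Qed.

Lemma Pv_pos : 0 < Pv.
Proof. unfold Pv. apply Rinv_0_lt_compat, lt_0_INR; lia. Qed.

Lemma der_LL p q : (p < m)%nat -> (q < m)%nat ->
  derivable_pt_lim (fun t => Q1 q (upd x0 p (- t)) / Q (upd x0 p (- t))) 0
    ((- Q2 p q x0 * Pv - - Gv * Gv) / Pv²).
Proof.
  intros Hp Hq. pose proof Pv_pos as HP0.
  assert (H := dpl_divf (fun t => Q1 q (upd x0 p (- t))) (fun t => Q (upd x0 p (- t))) _ _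
     (dpl_neg _ _ (Q2_der p q x0 Hp Hq)) (dpl_neg _ _ (Q1_der p x0 Hp))).
  cbv beta in H. rewrite Q_upd0, Q1_upd0 in H by auto. rewrite Q1_x0 in H by auto. apply H. lra.
Qed.

Lemma der_Ly p : (p < m)%nat ->
  derivable_pt_lim (fun t => - fsum m (fun q => Q1 q (upd x0 p (- t))) / Q (upd x0 p (- t))) 0
    ((Av * Pv - - Gv * - (INR m * Gv)) / Pv²).
Proof.
  intros Hp. pose proof Pv_pos as HP0.
  assert (Hu : derivable_pt_lim (fun t => - fsum m (fun q => Q1 q (upd x0 p (- t)))) 0 Av).
  { replace Av with (- fsum m (fun q => - Q2 p q x0)).
    apply (derivable_pt_lim_opp (fun t => fsum m (fun q => Q1 q (upd x0 p (- t))))).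
    apply (dpl_fsum m (fun q t => Q1 q (upd x0 p (- t))) (fun q => - Q2 p q x0)). intros q Hq. cbv beta. apply (dpl_neg (fun s => Q1 q (upd x0 p s))). apply Q2_der; auto.
    replace (fsum m (fun q => - Q2 p q x0)) with (-1 * fsum m (fun q => Q2 p q x0)).
    rewrite sumQ2_row; auto; ring. rewrite <- fsum_scal. apply fsum_ext; intros; ring. }
  assert (H := dpl_divf _ (fun t => Q (upd x0 p (- t))) _ _ Hu (dpl_neg _ _ (Q1_der p x0 Hp))).
  cbv beta in H. rewrite Q_upd0 in H. rewrite Q1_x0 in H by auto.
  rewrite (fsum_ext m _ (fun _ => Gv)) in H by (intros; apply Q1_upd0; auto).
  rewrite fsum_const in H. apply H. lra.
Qed.

Lemma E1_0 : derivable_pt_lim (fun t => Q (fun _ => t)) 0 (INR m * Gv).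
Proof.
  rewrite <- sumQ1. apply (dpl_ext (fun t => Q (fun v => x0 v + t))).
  intro t; apply Q_ext; intros; unfold x0; ring. apply E1.
Qed.

Lemma der_yL q : (q < m)%nat ->
  derivable_pt_lim (fun t => Q1 q (fun _ => t) / Q (fun _ => t)) 0
    ((Av * Pv - INR m * Gv * Gv) / Pv²).
Proof.
  intros Hq. pose proof Pv_pos as HP0.
  assert (H := dpl_divf _ _ _ _ (E2 q Hq) E1_0).
  rewrite sumQ2_col, Q_const0, Q1_const0 in H by auto. apply H. lra.
Qed.

Lemma der_yy :
  derivable_pt_lim (fun t => - fsum m (fun q => Q1 q (fun _ => t)) / Q (fun _ => t)) 0
    ((- (INR m * Av) * Pv - INR m * Gv * - (INR m * Gv)) / Pv²).
Proof.
  pose proof Pv_pos as HP0.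
  assert (Hu : derivable_pt_lim (fun t => - fsum m (fun q => Q1 q (fun _ => t))) 0 (- (INR m * Av))).
  { apply (derivable_pt_lim_opp (fun t => fsum m (fun q => Q1 q (fun _ => t)))).
    rewrite <- fsum_const. rewrite (fsum_ext m (fun _ => Av) (fun q => fsum m (fun i => Q2 i q x0)))
      by (intros; symmetry; apply sumQ2_col; auto).
    apply (dpl_fsum m (fun q t => Q1 q (fun _ => t))). intros q Hq. apply E2; auto. }
  assert (H := dpl_divf _ _ _ _ Hu E1_0).
  cbv beta in H. rewrite Q_const0 in H. rewrite (fsum_ext m _ (fun _ => Gv)) in H by (intros; apply Q1_const0; auto).
  rewrite fsum_const in H. apply H. lra.
Qed.

Lemma hess_entries H : is_hessian n phi th0 H ->
  (forall i j, (i < n)%nat -> (j < n)%nat -> ~ In j SS -> H i j = 0) /\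
  (forall i j, (i < n)%nat -> (j < n)%nat -> ~ In i SS -> H i j = 0) /\
  (forall p q, (p < m)%nat -> (q < m)%nat -> H (Lp p) (Lp q) = (- Q2 p q x0 * Pv - - Gv * Gv) / Pv²) /\
  (forall p, (p < m)%nat -> H (Lp p) y = (Av * Pv - - Gv * - (INR m * Gv)) / Pv²) /\
  (forall q, (q < m)%nat -> H y (Lp q) = (Av * Pv - INR m * Gv * Gv) / Pv²) /\
  H y y = (- (INR m * Av) * Pv - INR m * Gv * - (INR m * Gv)) / Pv².
Proof.
  intros [d [Hd [D [HD HH]]]].
  set (d1 := Rmin d delta0).
  assert (Hd1 : 0 < d1) by (apply Rmin_glb_lt; auto; apply delta0_pos).
  assert (Hball : forall th, (forall l, Rabs (th l) < d1) -> (forall l, Rabs (th l - th0 l) < d) /\ 0 < Q (X th)).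
  { intros th Hth. split.
    - intro l. unfold th0. rewrite Rminus_0_r. pose proof (Hth l); pose proof (Rmin_l d delta0); unfold d1 in *; lra.
    - apply Q_pos. intro l. pose proof (Hth l); pose proof (Rmin_r d delta0); unfold d1 in *; lra. }
  assert (DL : forall th p, (forall l, Rabs (th l) < d1) -> (p < m)%nat -> D (Lp p) th = Q1 p (X th) / Q (X th)).
  { intros th p Hth Hp. destruct (Hball th Hth) as [B1 B2].
    apply (uniqueness_limite _ _ _ _ (HD (Lp p) (Lp_lt p Hp) th B1) (part_L th p Hp B2)). }
  assert (Dy : forall th, (forall l, Rabs (th l) < d1) -> D y th = - fsum m (fun i => Q1 i (X th)) / Q (X th)).
  { intros th Hth. destruct (Hball th Hth) as [B1 B2].
    apply (uniqueness_limite _ _ _ _ (HD y y_lt th B1) (part_y th B2)). }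
  assert (Dout : forall th j, (forall l, Rabs (th l) < d1) -> (j < n)%nat -> ~ In j SS -> D j th = 0).
  { intros th j Hth Hj Hn. destruct (Hball th Hth) as [B1 B2].
    apply (uniqueness_limite _ _ _ _ (HD j Hj th B1) (part_out th j Hn)). }
  assert (Hbu : forall i t, Rabs t < d1 -> forall l, Rabs (upd th0 i t l) < d1).
  { intros i t Ht l. unfold upd, th0. destruct (Nat.eqb l i). rewrite Rplus_0_l; auto. rewrite Rabs_R0; auto. }
  assert (Hent : forall i j g l, (i < n)%nat -> (j < n)%nat ->
     (forall t, Rabs t < d1 -> D j (upd th0 i t) = g t) -> derivable_pt_lim g 0 l -> H i j = l).
  { intros i j g l Hi Hj E Hg. apply (uniqueness_limite (fun t => D j (upd th0 i t)) 0); [apply HH; auto|].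
    apply (dpl_loc g); auto. exists d1. split; auto. intros; symmetry; auto. }
  assert (C1 : forall i j, (i < n)%nat -> (j < n)%nat -> ~ In j SS -> H i j = 0).
  { intros i j Hi Hj Hn. apply (Hent i j (fun _ => 0)); [auto|auto| |apply derivable_pt_lim_const].
    intros t Ht. apply Dout; auto. }
  split; [exact C1|]. split.
  { intros i j Hi Hj Hn. destruct (in_dec Nat.eq_dec j SS) as [Hin|Hnin]; [|apply C1; auto].
    destruct (Nat.eq_dec j y) as [->|Hne].
    - apply (Hent i y (fun _ => - fsum m (fun q => Q1 q x0) / Q x0)); [auto|apply y_lt| |].
      + intros t Ht. rewrite Dy by auto. rewrite (Q_ext _ x0) by (apply Xu_out; auto). f_equal. f_equal.
        apply fsum_ext. intros q Hq. apply Q1_ext; auto. apply Xu_out; auto.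
      + apply derivable_pt_lim_const.
    - destruct (Lp_surj j Hin Hne) as [q [Hq <-]].
      apply (Hent i (Lp q) (fun _ => Q1 q x0 / Q x0)); [auto|apply Lp_lt; auto| |].
      + intros t Ht. rewrite DL by auto. rewrite (Q_ext _ x0) by (apply Xu_out; auto).
        rewrite (Q1_ext q _ x0) by (auto; apply Xu_out; auto). auto.
      + apply derivable_pt_lim_const. }
  split.
  { intros p q Hp Hq. apply (Hent _ _ (fun t => Q1 q (upd x0 p (- t)) / Q (upd x0 p (- t))) _ (Lp_lt p Hp) (Lp_lt q Hq)); [|apply der_LL; auto].
    intros t Ht. rewrite DL by auto. rewrite (Q_ext _ (upd x0 p (- t))) by (apply Xu_L; auto).
    rewrite (Q1_ext q _ (upd x0 p (- t))) by (auto; apply Xu_L; auto). auto. }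
  split.
  { intros p Hp. apply (Hent _ _ (fun t => - fsum m (fun q => Q1 q (upd x0 p (- t))) / Q (upd x0 p (- t))) _ (Lp_lt p Hp) y_lt); [|apply der_Ly; auto].
    intros t Ht. rewrite Dy by auto. rewrite (Q_ext _ (upd x0 p (- t))) by (apply Xu_L; auto).
    f_equal. f_equal. apply fsum_ext. intros q Hq. apply Q1_ext; auto. apply Xu_L; auto. }
  split.
  { intros q Hq. apply (Hent _ _ (fun t => Q1 q (fun _ => t) / Q (fun _ => t)) _ y_lt (Lp_lt q Hq)); [|apply der_yL; auto].
    intros t Ht. rewrite DL by auto. rewrite (Q_ext _ (fun _ => t)) by (apply Xu_y; auto).
    rewrite (Q1_ext q _ (fun _ => t)) by (auto; apply Xu_y; auto). auto. }
  { apply (Hent _ _ (fun t => - fsum m (fun q => Q1 q (fun _ => t)) / Q (fun _ => t)) _ y_lt y_lt); [|apply der_yy].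
    intros t Ht. rewrite Dy by auto. rewrite (Q_ext _ (fun _ => t)) by (apply Xu_y; auto).
    f_equal. f_equal. apply fsum_ext. intros q Hq. apply Q1_ext; auto. apply Xu_y; auto. }
Qed.

Lemma sparse g : (forall j, (j < n)%nat -> ~ In j SS -> g j = 0) ->
  fsum n g = g y + fsum m (fun q => g (Lp q)).
Proof.
  intro Hz. rewrite (fsum_ext n g (fun j => if in_dec Nat.eq_dec j SS then g j else 0)).
  - rewrite fsum_indicator; auto. rewrite (lsum_remove SS y g); auto. rewrite lsum_nth.
    fold LL. unfold LL at 1. rewrite hmL. auto.
  - intros j Hj. destruct (in_dec Nat.eq_dec j SS); auto.
Qed.

Lemma num_bounds K G2 av' bv' c1 c2 dy dL :
  (1 <= INR m) -> K = INR m + 1 -> 0 <= G2 ->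
  2 * av' + (INR m - 1) * bv' = 0 ->
  c1 = (av' + (INR m - 1) * bv') * K - INR m * G2 * K * K -> c1 <= 0 ->
  c2 = - bv' * K + G2 * K * K -> (2 <= INR m -> c2 <= 0) ->
  dy = - INR m * (av' + (INR m - 1) * bv') * K + INR m * INR m * G2 * K * K ->
  dL = - av' * K + G2 * K * K ->
  Rabs dy + INR m * Rabs c1 <= K ^ 4 * G2 /\
  Rabs c1 + Rabs dL + (INR m - 1) * Rabs c2 <= K ^ 4 * G2.
Proof.
  intros Hm HK HG Hibp Hc1 Hc1n Hc2 Hc2n Hdy HdL.
  set (U := G2 * K * K). assert (HU : 0 <= U) by (unfold U; subst K; nra).
  assert (HB : K ^ 4 * G2 = K * K * U) by (unfold U; ring).
  rewrite HB. set (al := av' * K).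
  assert (Hbv : (INR m - 1) * bv' = - 2 * av') by lra.
  assert (Ec1 : c1 = - al - INR m * U) by (rewrite Hc1; unfold al, U; replace (av' + (INR m - 1) * bv') with (- av') by lra; ring).
  assert (Edy : dy = INR m * al + INR m * INR m * U) by (rewrite Hdy; unfold al, U; replace (av' + (INR m - 1) * bv') with (- av') by lra; ring).
  assert (EdL : dL = - al + U) by (rewrite HdL; unfold al, U; ring).
  destruct (Req_dec (INR m) 1) as [Hm1|Hm2].
  - assert (al = 0) by (unfold al; rewrite Hm1 in Hibp; assert (av' = 0) by lra; subst; ring).
    rewrite Ec1, Edy, EdL, Hm1, H. rewrite Hm1 in HK. subst K.
    replace (- 0 - 1 * U) with (- U) by ring. replace (1 * 0 + 1 * 1 * U) with U by ring.
    replace (- 0 + U) with U by ring. rewrite Rabs_Ropp, Rabs_right by lra. split; nra.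
  - assert (Hm2' : 2 <= INR m).
    { destruct m as [|[|m']]; [simpl in Hm; lra|simpl in Hm2; lra|]. rewrite !S_INR. pose proof (pos_INR m'). lra. }
    specialize (Hc2n Hm2').
    assert (Hbk : bv' * K >= U) by (rewrite Hc2 in Hc2n; unfold U; lra).
    assert (Hal1 : - al <= INR m * U) by (rewrite Ec1 in Hc1n; lra).
    assert (Hal2 : 2 * al <= - (INR m - 1) * U).
    { assert ((INR m - 1) * (bv' * K) >= (INR m - 1) * U) by (apply Rmult_ge_compat_l; lra).
      assert ((INR m - 1) * (bv' * K) = - 2 * al) by (unfold al; rewrite <- Rmult_assoc, Hbv; ring). lra. }
    assert (Hdy0 : 0 <= dy) by (rewrite Edy; nra).
    assert (HdL0 : 0 <= dL) by (rewrite EdL; nra).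
    assert (Hc20 : c2 <= 0) by auto.
    rewrite (Rabs_right dy), (Rabs_left1 c1), (Rabs_right dL), (Rabs_left1 c2) by lra.
    split.
    + rewrite Edy, Ec1. subst K. nra.
    + rewrite Ec1, EdL, Hc2.
      assert ((INR m - 1) * (- (- bv' * K + U)) = - 2 * al - (INR m - 1) * U).
      { unfold al. replace ((INR m - 1) * (- (- bv' * K + U))) with ((INR m - 1) * bv' * K - (INR m - 1) * U) by ring.
        rewrite Hbv. ring. }
      fold U. rewrite H. subst K. nra.
Qed.

Lemma final_bound H : is_hessian n phi th0 H ->
  (forall i j, (i < n)%nat -> (j < n)%nat -> i <> j -> H i j <= 0) ->
  forall s, is_spectral_norm n H s -> s <= INR (S m) ^ 4 * Gv ^ 2.
Proof.
  intros hH hng s Hs.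
  destruct (hess_entries H hH) as [C1 [C2 [CLL [CLy [CyL Cyy]]]]].
  set (K := INR (S m)).
  assert (HK : K = INR m + 1) by (unfold K; apply S_INR).
  assert (HK0 : 0 < K) by (unfold K; apply lt_0_INR; lia).
  assert (Hm : 1 <= INR m) by (replace 1 with (INR 1) by auto; apply le_INR; auto).
  assert (EPv : Pv = / K) by auto.
  set (c1 := Av * K - INR m * (Gv * Gv) * K * K).
  set (c2 := - bv * K + Gv * Gv * K * K).
  set (dy := - INR m * Av * K + INR m * INR m * (Gv * Gv) * K * K).
  set (dL := - av * K + Gv * Gv * K * K).
  assert (VLy : forall p, (p < m)%nat -> H (Lp p) y = c1).
  { intros p Hp. rewrite CLy by auto. rewrite EPv. unfold c1, Rsqr. field. lra. }
  assert (VyL : forall q, (q < m)%nat -> H y (Lp q) = c1).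
  { intros q Hq. rewrite CyL by auto. rewrite EPv. unfold c1, Rsqr. field. lra. }
  assert (Vyy : H y y = dy) by (rewrite Cyy, EPv; unfold dy, Rsqr; field; lra).
  assert (VLL : forall p q, (p < m)%nat -> (q < m)%nat -> H (Lp p) (Lp q) = if Nat.eqb q p then dL else c2).
  { intros p q Hp Hq. rewrite CLL by auto. rewrite EPv. destruct (Nat.eqb_spec q p) as [->|Hne].
    - rewrite Q2_x0_diag by auto. unfold dL, Rsqr. field. lra.
    - rewrite Q2_x0_off by auto. unfold c2, Rsqr. field. lra. }
  assert (Hc1 : c1 <= 0).
  { rewrite <- (VLy 0%nat) by lia. apply hng; [apply Lp_lt; lia|apply y_lt|]. apply Lp_in; lia. }
  assert (Hc2 : 2 <= INR m -> c2 <= 0).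
  { intro H2. assert (Hm2 : (2 <= m)%nat) by (apply INR_le; simpl; lra).
    replace c2 with (H (Lp 0) (Lp 1)). apply hng; [apply Lp_lt; lia|apply Lp_lt; lia|].
    intro E. apply Lp_inj in E; lia. rewrite VLL by lia. simpl. auto. }
  assert (Hibp := IBP_ab hm1). rewrite INR_pred_m in Hibp.
  assert (NB := num_bounds K (Gv * Gv) av bv c1 c2 dy dL Hm HK ltac:(nra) Hibp
     ltac:(unfold c1, Av; rewrite INR_pred_m; ring) Hc1 ltac:(unfold c2; ring) Hc2
     ltac:(unfold dy, Av; rewrite INR_pred_m; ring) ltac:(unfold dL; ring)).
  destruct NB as [NBy NBL].
  set (B := K ^ 4 * (Gv * Gv)).
  assert (HB0 : 0 <= B) by (unfold B; apply Rmult_le_pos; [apply pow_le; lra|nra]).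
  assert (sumL : forall p, (p < m)%nat -> fsum m (fun q => Rabs (if Nat.eqb q p then dL else c2)) = Rabs dL + (INR m - 1) * Rabs c2).
  { intros p Hp. rewrite (fsum_split m _ p Hp). rewrite Nat.eqb_refl.
    rewrite (fsum_ext m _ (fun q => if Nat.eqb q p then 0 else Rabs c2)).
    rewrite sum_off, INR_pred_m by auto. auto.
    intros q Hq. destruct (Nat.eqb q p); auto. }
  assert (sumL' : forall p, (p < m)%nat -> fsum m (fun q => Rabs (if Nat.eqb p q then dL else c2)) = Rabs dL + (INR m - 1) * Rabs c2).
  { intros p Hp. rewrite <- (sumL p Hp). apply fsum_ext. intros q Hq. rewrite Nat.eqb_sym. auto. }
  assert (Row : forall i, (i < n)%nat -> fsum n (fun j => Rabs (H i j)) <= B).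
  { intros i Hi. rewrite sparse by (intros; rewrite C1; auto; rewrite Rabs_R0; auto).
    destruct (in_dec Nat.eq_dec i SS) as [Hin|Hnin].
    - destruct (Nat.eq_dec i y) as [->|Hne].
      + rewrite Vyy. rewrite (fsum_ext m _ (fun _ => Rabs c1)) by (intros; rewrite VyL; auto).
        rewrite fsum_const. unfold B. lra.
      + destruct (Lp_surj i Hin Hne) as [p [Hp <-]].
        rewrite VLy by auto. rewrite (fsum_ext m _ (fun q => Rabs (if Nat.eqb q p then dL else c2))) by (intros; rewrite VLL; auto).
        rewrite sumL by auto. unfold B. lra.
    - rewrite C2 by (auto; apply y_lt). rewrite (fsum_ext m _ (fun _ => 0)) by (intros; rewrite C2; auto; [apply Rabs_R0|apply Lp_lt; auto]).
      rewrite fsum_zero, Rabs_R0. lra. }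
  assert (Col : forall j, (j < n)%nat -> fsum n (fun i => Rabs (H i j)) <= B).
  { intros j Hj. rewrite sparse by (intros; rewrite C2; auto; rewrite Rabs_R0; auto).
    destruct (in_dec Nat.eq_dec j SS) as [Hin|Hnin].
    - destruct (Nat.eq_dec j y) as [->|Hne].
      + rewrite Vyy. rewrite (fsum_ext m _ (fun _ => Rabs c1)) by (intros; rewrite VLy; auto).
        rewrite fsum_const. unfold B. lra.
      + destruct (Lp_surj j Hin Hne) as [q [Hq <-]].
        rewrite VyL by auto. rewrite (fsum_ext m _ (fun p => Rabs (if Nat.eqb q p then dL else c2))) by (intros; rewrite VLL; auto).
        rewrite sumL' by auto. unfold B. lra.
    - rewrite C1 by (auto; apply y_lt). rewrite (fsum_ext m _ (fun _ => 0)) by (intros; rewrite C1; auto; [apply Rabs_R0|apply Lp_lt; auto]).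
      rewrite fsum_zero, Rabs_R0. lra. }
  apply Rle_trans with B; [|unfold B, K; right; ring].
  apply (proj2 Hs). intros r [x [Hx Hr]]. rewrite Hr.
  assert (Hsum := schur n H B x HB0 Row Col).
  rewrite <- (sqrt_square B) by auto. apply sqrt_le_1_alt.
  assert (B * B * fsum n (fun j => x j ^ 2) <= B * B * 1) by (apply Rmult_le_compat_l; nra).
  lra.
Qed.
End FF.

Theorem mainTheorem18 (F f f' : R -> R) (n : nat) (S : list nat)
  (hf' : forall x, derivable_pt_lim f x (f' x))
  (hf'c : continuity f')
  (hcdf : is_cdf_with_density F f)
  (hmean : improper_int (fun z => z * f z) 0)
  (hlim : forall eps, 0 < eps -> exists M, forall x, M <= Rabs x -> Rabs (f x) < eps)
  (hdui : dui_permitted F f f' (length S - 1))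
  (hS : NoDup S) (hSN : forall u, In u S -> (u < n)%nat)
  (hk : (2 <= length S)%nat)
  (hneg : forall v, In v S -> forall H,
      is_hessian n (fun th => - ln (pyS F f S v th)) (fun _ => 0) H ->
      forall i j, (i < n)%nat -> (j < n)%nat -> i <> j -> H i j <= 0) :
  forall y, In y S -> forall H,
    is_hessian n (fun th => - ln (pyS F f S y th)) (fun _ => 0) H ->
    forall s, is_spectral_norm n H s ->
      s <= INR (length S) ^ 4 *
           (Iint (fun z => f z ^ 2 * F z ^ (length S - 2))) ^ 2.
Proof.
  intros y hy H hH s hs.
  destruct (f_bounded f f' hf' hlim) as [Mf [HMf0 HMf]].
  assert (hmL : length (remove Nat.eq_dec y S) = (length S - 1)%nat) by (apply length_remove_nat; auto).
  assert (hm1 : (1 <= length S - 1)%nat) by lia.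
  assert (Hb := final_bound F f f' hf' hcdf hf'c hlim (length S - 1) Mf HMf hdui S y n hS hy hSN hmL hm1 H hH
     (hneg y hy H hH) s hs).
  replace (Datatypes.S (length S - 1)) with (length S) in Hb by lia.
  replace (length S - 2)%nat with (pred (length S - 1)) by lia.
  exact Hb.
Qed.
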